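(* The set $\mathcal M^o$ of isomorphism classes of connected open projective curves (disregarding orientation) is countable: $$\mathcal M^o=\{\infty,H\}\cup\tfrac12\mathbb N^*,$$ where $\infty$ corresponds to $\widetilde{\mathbb{RP}}^1=\mathbb R$, $H$ represents the isomorphism class of any half-line in $\mathbb R$, and each $x\in\frac12\mathbb N^*$ represents the isomorphism class of a bounded interval in $\mathbb R$ of winding number $x$; that is, every connected open projective curve is isomorphic to exactly one of these models, and these are pairwise non-isomorphic.
   Context: A projective structure on a curve $C$ is an atlas of real-valued charts whose transition maps are locally restrictions of homographies $x\mapsto\frac{ax+b}{cx+d}$, $\begin{pmatrix}a&b\\c&d\end{pmatrix}\in GL(2,\mathbb R)$; an isomorphism of projective curves is a diffeomorphism given in charts by homographies (orientation may be reversed). An open projective curve is a projective curve diffeomorphic to $\mathbb R$. Let $\pi:\mathbb R\to\mathbb{RP}^1$, $\pi(t)=[\cos t:\sin t]$; $\mathbb R$ (denoted $\widetilde{\mathbb{RP}}^1$) and each of its open intervals carry the projective structure pulled back by $\pi$ (charts: local inverses of homography-charts composed with $\pi$, e.g. $t\mapsto\cot t$ on $(k\pi,(k+1)\pi)$). Winding number of a bounded interval: for $a<b$, $W((a,b))=k$ if $b=a+k\pi$, $k\in\mathbb N$, and $W((a,b))=k+\frac12$ if $a+k\pi<b<a+(k+1)\pi$, $k\in\mathbb N$. Here $\frac12\mathbb N^*=\{\frac12,1,\frac32,2,\dots\}$. *)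

(* Defs.v *)
From Stdlib Require Import Reals Lra ZArith.
From Coquelicot Require Import Coquelicot.
Open Scope R_scope.

(* A subset of the real line (the carrier of a curve, an open interval). *)
Definition subsetR := R -> Prop.

(* A chart: an open domain U and a real-valued coordinate phi (meaningful on U). *)
Definition chart := (subsetR * (R -> R))%type.

Definition atlas := chart -> Prop.

(* (U, phi) is a topological chart of the curve with carrier D:
   U open, U included in D, phi continuous and injective on U
   (hence a homeomorphism onto an open subset of R). *)
Definition is_chart (D U : subsetR) (phi : R -> R) : Prop :=
  open U /\ (forall x, U x -> D x) /\
  (forall x, U x -> continuous phi x) /\
  (forall x y, U x -> U y -> phi x = phi y -> x = y).

Definition loc_homog (W : subsetR) (phi psi : R -> R) : Prop :=
  forall x, W x ->
    exists e : R, 0 < e /\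
    exists a b c d : R, a * d - b * c <> 0 /\
      forall y, W y -> Rabs (y - x) < e ->
        c * phi y + d <> 0 /\ psi y = (a * phi y + b) / (c * phi y + d).

Definition is_proj_atlas (D : subsetR) (A : atlas) : Prop :=
  (forall U phi, A (U, phi) -> is_chart D U phi) /\
  (forall x, D x -> exists U phi, A (U, phi) /\ U x) /\
  (forall U phi V psi, A (U, phi) -> A (V, psi) ->
     loc_homog (fun y => U y /\ V y) phi psi).

(* Isomorphism of projective curves (D1,A1) -> (D2,A2): a homeomorphism f
   (inverse g) which in charts is given by homographies; orientation may be
   reversed. *)
Definition proj_iso (D1 : subsetR) (A1 : atlas) (D2 : subsetR) (A2 : atlas) : Prop :=
  exists f g : R -> R,
    (forall x, D1 x -> D2 (f x)) /\ (forall y, D2 y -> D1 (g y)) /\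
    (forall x, D1 x -> g (f x) = x) /\ (forall y, D2 y -> f (g y) = y) /\
    (forall x, D1 x -> continuous f x) /\ (forall y, D2 y -> continuous g y) /\
    (forall U phi V psi, A1 (U, phi) -> A2 (V, psi) ->
       loc_homog (fun y => U y /\ V (f y)) phi (fun y => psi (f y))).

(* The projective structure on D (an open subset of R) pulled back by
   pi(t) = [cos t : sin t]: charts are cot t on D /\ (k pi, (k+1) pi) and
   tan t on D /\ (k pi - pi/2, k pi + pi/2), k integer (the two affine charts
   of RP^1 composed with pi). *)
Definition std_atlas (D : subsetR) : atlas :=
  fun c => let (U, phi) := c in
    (exists k : Z,
       (forall t, U t <-> (D t /\ IZR k * PI < t < (IZR k + 1) * PI)) /\
       (forall t, U t -> phi t = cos t / sin t)) \/
    (exists k : Z,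
       (forall t, U t <-> (D t /\ IZR k * PI - PI / 2 < t < IZR k * PI + PI / 2)) /\
       (forall t, U t -> phi t = tan t)).

Definition fullR : subsetR := fun _ => True.
Definition above (a : R) : subsetR := fun t => a < t.
Definition below (b : R) : subsetR := fun t => t < b.
Definition oint (a b : R) : subsetR := fun t => a < t < b.

Definition half_nat_pos (x : R) : Prop := exists n : nat, (1 <= n)%nat /\ x = INR n / 2.

Definition winding (a b x : R) : Prop :=
  a < b /\
  ((exists k : nat, b = a + INR k * PI /\ x = INR k) \/
   (exists k : nat, a + INR k * PI < b < a + (INR k + 1) * PI /\ x = INR k + 1 / 2)).

(* Main.v *)
Require Import Defs.
From Stdlib Require Import Reals Lra Lia ZArith ClassicalDescription ClassicalEpsilon.
From Coquelicot Require Import Coquelicot.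
Open Scope R_scope.

Lemma cplus (f g : R -> R) x : continuous f x -> continuous g x -> continuous (fun y => f y + g y) x.
Proof. intros; apply (continuous_plus f g); auto. Qed.
Lemma cmult (f g : R -> R) x : continuous f x -> continuous g x -> continuous (fun y => f y * g y) x.
Proof. intros; apply (continuous_mult f g); auto. Qed.
Lemma copp (f : R -> R) x : continuous f x -> continuous (fun y => - f y) x.
Proof. intros; apply (continuous_opp f); auto. Qed.
Lemma cconst (c x : R) : continuous (fun _ : R => c) x.
Proof. apply continuous_const. Qed.
Lemma cid (x : R) : continuous (fun y : R => y) x.
Proof. apply continuous_id. Qed.
Lemma cinv (f : R -> R) x : continuous f x -> f x <> 0 -> continuous (fun y => / f y) x.
Proof. intros; apply continuous_Rinv_comp; auto. Qed.
Lemma ccomp (f g : R -> R) x : continuous f x -> continuous g (f x) -> continuous (fun y => g (f y)) x.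
Proof. intros; apply (continuous_comp f g); auto. Qed.

Lemma locally_ball (x : R) (P : R -> Prop) :
  locally x P <-> exists e, 0 < e /\ forall y, Rabs (y - x) < e -> P y.
Proof.
  split.
  - intros [e He]. exists e. split; [apply cond_pos|]. intros y Hy. apply He. exact Hy.
  - intros [e [He H]]. exists (mkposreal e He). intros y Hy. apply H. exact Hy.
Qed.

Lemma open_ball (U : R -> Prop) x : open U -> U x -> exists e, 0 < e /\ forall y, Rabs (y - x) < e -> U y.
Proof. intros HU Hx. apply locally_ball. apply HU. exact Hx. Qed.

Lemma cont_eps (f : R -> R) x :
  continuous f x -> forall eps, 0 < eps -> exists d, 0 < d /\ forall y, Rabs (y - x) < d -> Rabs (f y - f x) < eps.
Proof.
  intros Hc eps He.
  assert (H := proj1 (filterlim_locally f (f x)) Hc (mkposreal eps He)).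
  apply locally_ball in H. destruct H as [d [Hd H]]. exists d. split; [auto|].
  intros y Hy. apply (H y Hy).
Qed.

Lemma eps_cont (f : R -> R) x :
  (forall eps, 0 < eps -> exists d, 0 < d /\ forall y, Rabs (y - x) < d -> Rabs (f y - f x) < eps) ->
  continuous f x.
Proof.
  intros H. apply (proj2 (filterlim_locally f (f x))).
  intros eps. apply locally_ball. destruct (H eps (cond_pos eps)) as [d [Hd H2]].
  exists d; split; [auto|]. intros y Hy. apply (H2 y Hy).
Qed.

Lemma cont_preim (f : R -> R) x (V : R -> Prop) :
  continuous f x -> open V -> V (f x) -> exists e, 0 < e /\ forall y, Rabs (y - x) < e -> V (f y).
Proof.
  intros Hc HV Hx. apply locally_ball.
  apply Hc. apply HV. exact Hx.
Qed.

Lemma cont_ext (f g : R -> R) x e : 0 < e -> (forall y, Rabs (y - x) < e -> f y = g y) ->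
  continuous f x -> continuous g x.
Proof.
  intros He H Hc. apply (continuous_ext_loc g f x); auto.
  apply locally_ball. exists e; split; auto.
Qed.

Lemma cont_ext_open (f g : R -> R) (I : R -> Prop) x : open I -> I x -> (forall y, I y -> f y = g y) ->
  continuous f x -> continuous g x.
Proof.
  intros HI Hx H Hc. destruct (open_ball I x HI Hx) as [e [He H2]].
  apply (cont_ext f g x e He); auto.
Qed.

Lemma cont_cpt (f : R -> R) x : continuous f x -> continuity_pt f x.
Proof. intros H. apply continuity_pt_filterlim. exact H. Qed.

Lemma ivt (f : R -> R) a b v : a <= b -> (forall t, a <= t <= b -> continuous f t) ->
  (f a <= v <= f b \/ f b <= v <= f a) -> exists c, a <= c <= b /\ f c = v.
Proof.
  intros Hab Hc Hv.
  destruct (Req_dec (f a) v) as [E|E]. { exists a; split; auto; lra. }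
  destruct (Req_dec (f b) v) as [E2|E2]. { exists b; split; auto; lra. }
  assert (Hlt : a < b). { destruct (Req_dec a b); [subst; lra| lra]. }
  destruct Hv as [Hv|Hv].
  - destruct (Ranalysis5.IVT_interv (fun t => f t - v) a b) as [c [Hc1 Hc2]]; auto.
    + intros t Ht. apply cont_cpt. apply cplus; [apply Hc; auto| apply cconst].
    + lra. + lra.
    + exists c; split; auto; lra.
  - destruct (Ranalysis5.IVT_interv (fun t => v - f t) a b) as [c [Hc1 Hc2]]; auto.
    + intros t Ht. apply cont_cpt. apply cplus; [apply cconst| apply copp; apply Hc; auto].
    + lra. + lra.
    + exists c; split; auto; lra.
Qed.

Definition vec := (R * R)%type.
Definition cross (u w : vec) : R := fst u * snd w - snd u * fst w.
Definition par (u w : vec) : Prop := cross u w = 0.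
Definition nz (u : vec) : Prop := ~ (fst u = 0 /\ snd u = 0).
Record mat := Mat { m11 : R; m12 : R; m21 : R; m22 : R }.
Definition mapp (M : mat) (u : vec) : vec :=
  (m11 M * fst u + m12 M * snd u, m21 M * fst u + m22 M * snd u).
Definition mdet (M : mat) : R := m11 M * m22 M - m12 M * m21 M.
Definition mmul (N M : mat) : mat :=
  Mat (m11 N * m11 M + m12 N * m21 M) (m11 N * m12 M + m12 N * m22 M)
      (m21 N * m11 M + m22 N * m21 M) (m21 N * m12 M + m22 N * m22 M).
Definition madj (M : mat) : mat := Mat (m22 M) (- m12 M) (- m21 M) (m11 M).
Definition mid : mat := Mat 1 0 0 1.
Definition vv (t : R) : vec := (cos t, sin t).

Lemma cross_mapp N u w : cross (mapp N u) (mapp N w) = mdet N * cross u w.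
Proof. destruct u, w, N; unfold cross, mapp, mdet; simpl; ring. Qed.
Lemma mapp_mul N M u : mapp (mmul N M) u = mapp N (mapp M u).
Proof. destruct u, N, M; unfold mapp, mmul; simpl; f_equal; ring. Qed.
Lemma mdet_mul N M : mdet (mmul N M) = mdet N * mdet M.
Proof. destruct N, M; unfold mdet, mmul; simpl; ring. Qed.
Lemma mdet_adj M : mdet (madj M) = mdet M.
Proof. destruct M; unfold mdet, madj; simpl; ring. Qed.
Lemma mapp_adj M u : mapp (madj M) (mapp M u) = (mdet M * fst u, mdet M * snd u).
Proof. destruct u, M; unfold mapp, madj, mdet; simpl; f_equal; ring. Qed.
Lemma mapp_id u : mapp mid u = u.
Proof. destruct u; unfold mapp, mid; simpl; f_equal; ring. Qed.
Lemma mdet_id : mdet mid = 1.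
Proof. unfold mdet, mid; simpl; ring. Qed.

Lemma par_refl u : par u u.
Proof. unfold par, cross; ring. Qed.
Lemma par_sym u w : par u w -> par w u.
Proof. unfold par, cross; intros; lra. Qed.
Lemma par_trans u w z : nz w -> par u w -> par w z -> par u z.
Proof.
  unfold par, nz, cross; intros Hw H1 H2.
  destruct u as [u1 u2], w as [w1 w2], z as [z1 z2]; simpl in *.
  assert (E1 : w1 * (u1 * z2 - u2 * z1) = u1 * (w1 * z2 - w2 * z1) + z1 * (u1 * w2 - u2 * w1)) by ring.
  assert (E2 : w2 * (u1 * z2 - u2 * z1) = u2 * (w1 * z2 - w2 * z1) + z2 * (u1 * w2 - u2 * w1)) by ring.
  rewrite H1, H2 in E1, E2.
  destruct (Req_dec (u1 * z2 - u2 * z1) 0) as [E|E]; auto.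
  exfalso; apply Hw; split.
  - apply (Rmult_eq_reg_r (u1 * z2 - u2 * z1)); auto; lra.
  - apply (Rmult_eq_reg_r (u1 * z2 - u2 * z1)); auto; lra.
Qed.
Lemma par_mapp N u w : par u w -> par (mapp N u) (mapp N w).
Proof. unfold par; intros H; rewrite cross_mapp, H; ring. Qed.
Lemma par_mapp_inv N u w : mdet N <> 0 -> par (mapp N u) (mapp N w) -> par u w.
Proof. unfold par; intros Hd H; rewrite cross_mapp in H.
  apply Rmult_integral in H; destruct H; [contradiction|auto]. Qed.
Lemma nz_mapp M u : mdet M <> 0 -> nz u -> nz (mapp M u).
Proof.
  destruct M as [a b c d], u as [u1 u2]; unfold nz, mapp, mdet; simpl.
  intros Hd Hu [H1 H2]. apply Hu.
  assert (E1 : (a * d - b * c) * u1 = d * (a * u1 + b * u2) - b * (c * u1 + d * u2)) by ring.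
  assert (E2 : (a * d - b * c) * u2 = a * (c * u1 + d * u2) - c * (a * u1 + b * u2)) by ring.
  rewrite H1, H2 in E1, E2.
  split; apply (Rmult_eq_reg_l (a * d - b * c)); auto; lra.
Qed.
Lemma par_scal_r u w r : par u (r * fst w, r * snd w) -> r <> 0 -> par u w.
Proof. unfold par, cross; simpl; intros H Hr.
  apply (Rmult_eq_reg_l r); auto. lra. Qed.
Lemma par_scal_l u w r : par u w -> par u (r * fst w, r * snd w).
Proof. unfold par, cross; simpl; intros H. 
  replace (fst u * (r * snd w) - snd u * (r * fst w)) with (r * (fst u * snd w - snd u * fst w)) by ring.
  rewrite H; ring. Qed.
Lemma nz_vv t : nz (vv t).
Proof. unfold nz, vv; simpl; intros [H1 H2]. assert (H := sin2_cos2 t).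
  unfold Rsqr in H. rewrite H1, H2 in H. lra. Qed.
Lemma nz_phi1 (a : R) : nz (a, 1).
Proof. unfold nz; simpl; lra. Qed.

Lemma par_adj M p q : mdet M <> 0 -> par q (mapp M p) -> par p (mapp (madj M) q).
Proof.
  intros Hd H. apply (par_mapp (madj M)) in H. rewrite mapp_adj in H.
  apply par_sym in H. apply par_sym. 
  unfold par, cross in *; simpl in *.
  apply (Rmult_eq_reg_l (mdet M)); auto. lra.
Qed.

Lemma quad3 (al be ga a1 b1 a2 b2 a3 b3 : R) :
  a1 * b2 - a2 * b1 <> 0 -> a1 * b3 - a3 * b1 <> 0 -> a2 * b3 - a3 * b2 <> 0 ->
  al * a1 * a1 + be * a1 * b1 + ga * b1 * b1 = 0 ->
  al * a2 * a2 + be * a2 * b2 + ga * b2 * b2 = 0 ->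
  al * a3 * a3 + be * a3 * b3 + ga * b3 * b3 = 0 ->
  al = 0 /\ be = 0 /\ ga = 0.
Proof.
  intros H12 H13 H23 E1 E2 E3.
  set (D := (a1 * b2 - a2 * b1) * (a1 * b3 - a3 * b1) * (a2 * b3 - a3 * b2)).
  assert (HD : D <> 0) by (unfold D; repeat apply Rmult_integral_contrapositive_currified; auto).
  set (r11 := a1*a1) in *. set (r12 := a1*b1). set (r13 := b1*b1).
  set (r21 := a2*a2). set (r22 := a2*b2). set (r23 := b2*b2).
  set (r31 := a3*a3). set (r32 := a3*b3). set (r33 := b3*b3).
  set (F1 := al * a1 * a1 + be * a1 * b1 + ga * b1 * b1) in *.
  set (F2 := al * a2 * a2 + be * a2 * b2 + ga * b2 * b2) in *.
  set (F3 := al * a3 * a3 + be * a3 * b3 + ga * b3 * b3) in *.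
  set (Det := r11*(r22*r33 - r23*r32) - r12*(r21*r33 - r23*r31) + r13*(r21*r32-r22*r31)).
  assert (EDet : Det = - D \/ Det = D).
  { unfold Det, D, r11, r12, r13, r21, r22, r23, r31, r32, r33.
    first [left; ring | right; ring]. }
  assert (HDet : Det <> 0) by (destruct EDet as [E|E]; rewrite E; auto; intro; apply HD; lra).
  assert (A1 : al * Det = F1*(r22*r33 - r23*r32) - F2*(r12*r33 - r13*r32) + F3*(r12*r23 - r13*r22)).
  { unfold Det, F1, F2, F3, r11, r12, r13, r21, r22, r23, r31, r32, r33; ring. }
  assert (A2 : be * Det = - F1*(r21*r33 - r23*r31) + F2*(r11*r33 - r13*r31) - F3*(r11*r23 - r13*r21)).
  { unfold Det, F1, F2, F3, r11, r12, r13, r21, r22, r23, r31, r32, r33; ring. }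
  assert (A3 : ga * Det = F1*(r21*r32 - r22*r31) - F2*(r11*r32 - r12*r31) + F3*(r11*r22 - r12*r21)).
  { unfold Det, F1, F2, F3, r11, r12, r13, r21, r22, r23, r31, r32, r33; ring. }
  rewrite E1, E2, E3 in A1, A2, A3.
  repeat split; apply (Rmult_eq_reg_r Det); auto; lra.
Qed.

Lemma uniq3 M N p1 p2 p3 : ~ par p1 p2 -> ~ par p1 p3 -> ~ par p2 p3 ->
  par (mapp M p1) (mapp N p1) -> par (mapp M p2) (mapp N p2) -> par (mapp M p3) (mapp N p3) ->
  forall w, par (mapp M w) (mapp N w).
Proof.
  intros H12 H13 H23 E1 E2 E3 w.
  set (al := m11 M * m21 N - m21 M * m11 N).
  set (be := m11 M * m22 N + m12 M * m21 N - m21 M * m12 N - m22 M * m11 N).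
  set (ga := m12 M * m22 N - m22 M * m12 N).
  assert (Q : forall u, cross (mapp M u) (mapp N u) = al * fst u * fst u + be * fst u * snd u + ga * snd u * snd u).
  { intros [u1 u2]; unfold cross, mapp, al, be, ga; simpl; ring. }
  unfold par in *. rewrite Q in E1, E2, E3. rewrite Q.
  destruct p1 as [a1 b1], p2 as [a2 b2], p3 as [a3 b3]; unfold cross in *; simpl in *.
  assert (K12 : a1 * b2 - a2 * b1 <> 0) by (intro; apply H12; lra).
  assert (K13 : a1 * b3 - a3 * b1 <> 0) by (intro; apply H13; lra).
  assert (K23 : a2 * b3 - a3 * b2 <> 0) by (intro; apply H23; lra).
  destruct (quad3 al be ga a1 b1 a2 b2 a3 b3 K12 K13 K23 E1 E2 E3) as [Ha [Hb Hg]].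
  rewrite Ha, Hb, Hg; ring.
Qed.

Definition cong (s t : R) : Prop := exists j : Z, s - t = IZR j * PI.

Lemma cross_vv s t : cross (vv s) (vv t) = sin (t - s).
Proof. unfold cross, vv; simpl. rewrite sin_minus. ring. Qed.

Lemma par_vv_cong s t : par (vv s) (vv t) <-> cong s t.
Proof.
  unfold par; rewrite cross_vv. split.
  - intros H. apply sin_eq_0_0 in H. destruct H as [k Hk]. exists (- k)%Z.
    rewrite opp_IZR. lra.
  - intros [j Hj]. replace (t - s) with (IZR (- j) * PI) by (rewrite opp_IZR; lra).
    apply sin_eq_0_1. eauto.
Qed.

Lemma cong_small s t : Rabs (s - t) < PI -> cong s t -> s = t.
Proof.
  intros Hs [j Hj]. rewrite Hj in Hs.
  assert (HP := PI_RGT_0).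
  rewrite Rabs_mult, (Rabs_right PI) in Hs by lra.
  assert (Rabs (IZR j) < 1) by (apply (Rmult_lt_reg_r PI); lra).
  rewrite <- abs_IZR in H. apply lt_IZR in H.
  assert (j = 0%Z) by lia. subst. simpl in Hj. lra.
Qed.

Lemma cong_sym s t : cong s t -> cong t s.
Proof. intros [j Hj]; exists (- j)%Z; rewrite opp_IZR; lra. Qed.
Lemma cong_trans s t u : cong s t -> cong t u -> cong s u.
Proof. intros [j Hj] [k Hk]; exists (j + k)%Z; rewrite plus_IZR; lra. Qed.

Definition rel (W : R -> Prop) (p q : R -> vec) : Prop :=
  forall x, W x -> exists e, 0 < e /\ exists M, mdet M <> 0 /\
    forall y, W y -> Rabs (y - x) < e -> par (q y) (mapp M (p y)).

Definition conv (I : R -> Prop) : Prop := forall x y z, I x -> I z -> x <= y <= z -> I y.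

Lemma rel_mono (W W' : R -> Prop) p q : (forall y, W' y -> W y) -> rel W p q -> rel W' p q.
Proof.
  intros Hs H x Hx. destruct (H x (Hs x Hx)) as [e [He [M [HM H2]]]].
  exists e; split; auto; exists M; split; auto.
Qed.

Lemma rel_loc (W : R -> Prop) p q :
  (forall x, W x -> exists e, 0 < e /\ rel (fun y => W y /\ Rabs (y - x) < e) p q) -> rel W p q.
Proof.
  intros H x Hx. destruct (H x Hx) as [e [He Hr]].
  destruct (Hr x) as [e' [He' [M [HM H2]]]].
  { split; auto. unfold Rminus; rewrite Rplus_opp_r, Rabs_R0; auto. }
  exists (Rmin e e'); split; [apply Rmin_pos; auto|]. exists M; split; auto.
  intros y Hy Hyx. apply H2.
  - split; auto. apply Rlt_le_trans with (1 := Hyx). apply Rmin_l.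
  - apply Rlt_le_trans with (1 := Hyx). apply Rmin_r.
Qed.

Lemma rel_const (W : R -> Prop) p q M : mdet M <> 0 ->
  (forall y, W y -> par (q y) (mapp M (p y))) -> rel W p q.
Proof.
  intros HM H x Hx. exists 1; split; [lra|]. exists M; split; auto.
Qed.

Lemma rel_trans (W : R -> Prop) p q r : (forall y, W y -> nz (q y)) ->
  rel W p q -> rel W q r -> rel W p r.
Proof.
  intros Hnz H1 H2 x Hx.
  destruct (H1 x Hx) as [e1 [He1 [M [HM K1]]]].
  destruct (H2 x Hx) as [e2 [He2 [N [HN K2]]]].
  exists (Rmin e1 e2); split; [apply Rmin_pos; auto|].
  exists (mmul N M); split.
  { rewrite mdet_mul. apply Rmult_integral_contrapositive_currified; auto. }
  intros y Hy Hyx. rewrite mapp_mul.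
  assert (A1 : Rabs (y - x) < e1) by (apply Rlt_le_trans with (1 := Hyx); apply Rmin_l).
  assert (A2 : Rabs (y - x) < e2) by (apply Rlt_le_trans with (1 := Hyx); apply Rmin_r).
  apply par_trans with (mapp N (q y)).
  - apply nz_mapp; auto.
  - apply K2; auto.
  - apply par_mapp. apply K1; auto.
Qed.

Lemma rel_sym (W : R -> Prop) p q : rel W p q -> rel W q p.
Proof.
  intros H x Hx. destruct (H x Hx) as [e [He [M [HM K]]]].
  exists e; split; auto. exists (madj M); split; [rewrite mdet_adj; auto|].
  intros y Hy Hyx. apply par_adj; auto.
Qed.

Lemma rel_ext (W : R -> Prop) p q p' q' : (forall y, W y -> p y = p' y) -> (forall y, W y -> q y = q' y) ->
  rel W p q -> rel W p' q'.
Proof.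
  intros Ep Eq H x Hx. destruct (H x Hx) as [e [He [M [HM K]]]].
  exists e; split; auto. exists M; split; auto.
  intros y Hy Hyx. rewrite <- Ep, <- Eq; auto.
Qed.

Definition ND (I : R -> Prop) (p : R -> vec) : Prop :=
  forall c d, c < d -> (forall y, c < y < d -> I y) ->
  exists y1 y2 y3, c < y1 < d /\ c < y2 < d /\ c < y3 < d /\
    ~ par (p y1) (p y2) /\ ~ par (p y1) (p y3) /\ ~ par (p y2) (p y3).

Lemma rabs0 x : Rabs (x - x) = 0.
Proof. unfold Rminus; rewrite Rplus_opp_r; apply Rabs_R0. Qed.

Lemma rigid_right (I : R -> Prop) p q x0 M0 e0 :
  conv I -> (forall y, I y -> nz (p y)) -> (forall y, I y -> nz (q y)) -> ND I p -> rel I p q ->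
  I x0 -> 0 < e0 -> mdet M0 <> 0 ->
  (forall y, I y -> Rabs (y - x0) < e0 -> par (q y) (mapp M0 (p y))) ->
  forall x1, I x1 -> x0 <= x1 -> par (q x1) (mapp M0 (p x1)).
Proof.
  intros Hc Hp Hq Hnd Hr Hx0 He0 HM0 H0 x1 Hx1 Hle.
  destruct (classic (par (q x1) (mapp M0 (p x1)))) as [P|P]; auto. exfalso.
  assert (Hlt : x0 < x1).
  { destruct Hle as [Hle|Hle]; auto. subst. exfalso; apply P. apply H0; auto. rewrite rabs0; auto. }
  set (G := fun x => forall y, x0 <= y <= x -> par (q y) (mapp M0 (p y))).
  set (E := fun x => x0 <= x <= x1 /\ G x).
  assert (IE : forall y, x0 <= y <= x1 -> I y) by (intros y Hy; apply (Hc x0 y x1); auto).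
  assert (Eb : bound E) by (exists x1; intros x [Hx _]; lra).
  assert (Ene : exists x, E x).
  { exists x0. split; [lra|]. intros y Hy. replace y with x0 by lra. apply H0; auto. rewrite rabs0; auto. }
  destruct (completeness E Eb Ene) as [T [HT1 HT2]].
  assert (Tx1 : T <= x1) by (apply HT2; intros x [Hx _]; lra).
  set (s0 := x0 + Rmin e0 (x1 - x0) / 2).
  assert (Hs0 : E s0).
  { assert (0 < Rmin e0 (x1 - x0)) by (apply Rmin_pos; lra).
    assert (Rmin e0 (x1 - x0) <= e0) by apply Rmin_l.
    assert (Rmin e0 (x1 - x0) <= x1 - x0) by apply Rmin_r.
    unfold s0; split; [lra|]. intros y Hy. apply H0; [apply IE; lra|].
    rewrite Rabs_right; lra. }
  assert (Ts0 : s0 <= T) by (apply HT1; auto).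
  assert (Tx0 : x0 < T).
  { unfold s0 in Ts0. assert (0 < Rmin e0 (x1 - x0)) by (apply Rmin_pos; lra). lra. }
  assert (G' : forall y, x0 <= y < T -> par (q y) (mapp M0 (p y))).
  { intros y Hy. destruct (classic (exists s, E s /\ y < s)) as [[s [[_ Gs] Hs]]|N].
    - apply Gs; lra.
    - exfalso. assert (T <= y); [|lra]. apply HT2. intros x Ex.
      destruct (Rle_lt_dec x y); auto. exfalso; apply N; eauto. }
  assert (IT : I T) by (apply IE; lra).
  destruct (Hr T IT) as [e [He [MT [HMT KT]]]].
  set (c := Rmax x0 (T - e)).
  assert (Hc1 : c < T) by (unfold c; apply Rmax_lub_lt; lra).
  destruct (Hnd c T Hc1) as [y1 [y2 [y3 [Y1 [Y2 [Y3 [N12 [N13 N23]]]]]]]].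
  { intros y Hy. apply IE. assert (x0 <= c) by apply Rmax_l. lra. }
  assert (Hcx : x0 <= c) by apply Rmax_l.
  assert (Hce : T - e <= c) by apply Rmax_r.
  assert (Kpar : forall y, c < y < T -> par (mapp MT (p y)) (mapp M0 (p y))).
  { intros y Hy. apply par_trans with (q y).
    - apply Hq. apply IE; lra.
    - apply par_sym. apply KT; [apply IE; lra|]. rewrite Rabs_left; lra.
    - apply G'; lra. }
  assert (U : forall w, par (mapp MT w) (mapp M0 w)).
  { apply (uniq3 MT M0 (p y1) (p y2) (p y3)); auto; apply Kpar; auto. }
  set (s1 := Rmin (T + e / 2) x1).
  assert (Es1 : E s1).
  { assert (s1 <= T + e/2) by apply Rmin_l. assert (s1 <= x1) by apply Rmin_r.
    assert (T <= s1) by (apply Rmin_glb; lra).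
    split; [lra|]. intros y Hy.
    destruct (Rlt_le_dec y T) as [Hy2|Hy2]; [apply G'; lra|].
    apply par_trans with (mapp MT (p y)).
    - apply nz_mapp; auto. apply Hp; apply IE; lra.
    - apply KT; [apply IE; lra|]. rewrite Rabs_right; lra.
    - apply U. }
  assert (s1 <= T) by (apply HT1; auto).
  assert (s1 = x1).
  { unfold s1 in *. unfold Rmin in *. destruct (Rle_dec (T + e/2) x1); lra. }
  destruct Es1 as [_ Gs1]. apply P. apply Gs1. lra.
Qed.

Lemma rigid (I : R -> Prop) p q x0 :
  conv I -> (forall y, I y -> nz (p y)) -> (forall y, I y -> nz (q y)) -> ND I p -> rel I p q ->
  I x0 -> exists M, mdet M <> 0 /\ forall y, I y -> par (q y) (mapp M (p y)).
Proof.
  intros Hc Hp Hq Hnd Hr Hx0.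
  destruct (Hr x0 Hx0) as [e0 [He0 [M0 [HM0 K0]]]].
  exists M0; split; auto. intros y Hy.
  destruct (Rle_lt_dec x0 y) as [Hle|Hlt].
  - apply (rigid_right I p q x0 M0 e0); auto.
  -
    set (I' := fun t => I (- t)). set (p' := fun t => p (- t)). set (q' := fun t => q (- t)).
    assert (R := rigid_right I' p' q' (- x0) M0 e0).
    unfold I', p', q' in R. rewrite !Ropp_involutive in R.
    replace y with (- - y) by ring. apply R; auto.
    + intros a b c' Ha Hc' Hb. apply (Hc (- c') (- b) (- a)); auto; lra.
    + intros c d Hcd Hin. destruct (Hnd (- d) (- c)) as [y1 [y2 [y3 [Y1 [Y2 [Y3 [N12 [N13 N23]]]]]]]]; [lra| |].
      * intros t Ht. replace t with (- - t) by ring. apply Hin. lra.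
      * exists (- y1), (- y2), (- y3). rewrite !Ropp_involutive. repeat split; auto; lra.
    + intros x Hx. destruct (Hr (- x) Hx) as [e [He [M [HM K]]]].
      exists e; split; auto. exists M; split; auto.
      intros t Ht Htx. apply K; auto. replace (- t - - x) with (- (t - x)) by ring. rewrite Rabs_Ropp; auto.
    + intros t Ht Htx. apply K0; auto. replace (- t - x0) with (- (t - - x0)) by ring. rewrite Rabs_Ropp; auto.
    + rewrite Ropp_involutive; auto.
    + lra.
Qed.

Lemma half_not_int (j : Z) : IZR j * PI = PI / 2 -> False.
Proof.
  intros H. assert (HP := PI_RGT_0).
  assert (IZR j = 1/2) by (apply (Rmult_eq_reg_r PI); lra).
  assert (IZR (2 * j) = 1) by (rewrite mult_IZR; simpl; lra).
  apply eq_IZR in H1. lia.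
Qed.

Lemma ivt2 (f : R -> R) (I : R -> Prop) a b v : conv I -> I a -> I b ->
  (forall t, I t -> continuous f t) ->
  (f a <= v <= f b \/ f b <= v <= f a) -> exists c, Rmin a b <= c <= Rmax a b /\ f c = v.
Proof.
  intros Hc Ha Hb Hf Hv.
  destruct (Rle_dec a b) as [Hab|Hab].
  - rewrite Rmin_left, Rmax_right by lra. apply ivt; auto.
    intros t Ht. apply Hf. apply (Hc a t b); auto.
  - rewrite Rmin_right, Rmax_left by lra. apply ivt; [lra| |tauto].
    intros t Ht. apply Hf. apply (Hc b t a); auto.
Qed.

Lemma cong_const (f g : R -> R) (I : R -> Prop) y0 y1 : conv I ->
  (forall y, I y -> continuous f y) -> (forall y, I y -> continuous g y) ->
  (forall y, I y -> cong (f y) (g y)) -> I y0 -> f y0 = g y0 -> I y1 -> f y1 = g y1.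
Proof.
  intros Hc Hf Hg Hcg H0 E0 H1.
  set (k := fun y => f y - g y).
  assert (Hk : forall y, I y -> continuous k y) by (intros; apply cplus; [auto| apply copp; auto]).
  destruct (Hcg y1 H1) as [j Hj].
  destruct (Z.eq_dec j 0) as [Ej|Ej]. { subst; simpl in Hj; lra. }
  exfalso. assert (HP := PI_RGT_0).
  destruct (Z_lt_le_dec 0 j) as [Hj0|Hj0].
  - assert (1 <= IZR j) by (apply IZR_le; lia).
    destruct (ivt2 k I y0 y1 (PI/2) Hc H0 H1 Hk) as [c [Hc1 Hc2]].
    { left; unfold k; split; [lra|]. rewrite Hj. nra. }
    assert (Ic : I c).
    { destruct (Rle_dec y0 y1); [rewrite Rmin_left, Rmax_right in Hc1 by lra; apply (Hc y0 c y1); auto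
      | rewrite Rmin_right, Rmax_left in Hc1 by lra; apply (Hc y1 c y0); auto]. }
    destruct (Hcg c Ic) as [j' Hj']. unfold k in Hc2. apply (half_not_int j'). lra.
  - assert (IZR j <= -1) by (apply IZR_le; lia).
    destruct (ivt2 k I y0 y1 (- (PI/2)) Hc H0 H1 Hk) as [c [Hc1 Hc2]].
    { right; unfold k; split; [|lra]. rewrite Hj. nra. }
    assert (Ic : I c).
    { destruct (Rle_dec y0 y1); [rewrite Rmin_left, Rmax_right in Hc1 by lra; apply (Hc y0 c y1); auto
      | rewrite Rmin_right, Rmax_left in Hc1 by lra; apply (Hc y1 c y0); auto]. }
    destruct (Hcg c Ic) as [j' Hj']. unfold k in Hc2. apply (half_not_int (- j')). rewrite opp_IZR. lra.
Qed.

Definition injon (I : R -> Prop) (f : R -> R) := forall x y, I x -> I y -> f x = f y -> x = y.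

Lemma between (f : R -> R) (I : R -> Prop) x y z : conv I -> (forall t, I t -> continuous f t) ->
  injon I f -> I x -> I z -> x < y < z ->
  (f x < f y < f z) \/ (f z < f y < f x).
Proof.
  intros Hc Hf Hi Hx Hz Hy.
  assert (Iy : I y) by (apply (Hc x y z); auto; lra).
  assert (Nxy : f x <> f y) by (intro E; apply Hi in E; auto; lra).
  assert (Nyz : f y <> f z) by (intro E; apply Hi in E; auto; lra).
  assert (Nxz : f x <> f z) by (intro E; apply Hi in E; auto; lra).
  destruct (Rlt_dec (f x) (f z)) as [L|L].
  - left. split.
    + destruct (Rlt_dec (f x) (f y)); auto. exfalso.
      destruct (ivt2 f I y z (f x) Hc Iy Hz Hf) as [c [Hc1 Hc2]]; [lra|].
      rewrite Rmin_left, Rmax_right in Hc1 by lra.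
      assert (I c) by (apply (Hc y c z); auto). apply Hi in Hc2; auto. lra.
    + destruct (Rlt_dec (f y) (f z)); auto. exfalso.
      destruct (ivt2 f I x y (f z) Hc Hx Iy Hf) as [c [Hc1 Hc2]]; [lra|].
      rewrite Rmin_left, Rmax_right in Hc1 by lra.
      assert (I c) by (apply (Hc x c y); auto). apply Hi in Hc2; auto. lra.
  - right. split.
    + destruct (Rlt_dec (f z) (f y)); auto. exfalso.
      destruct (ivt2 f I x y (f z) Hc Hx Iy Hf) as [c [Hc1 Hc2]]; [lra|].
      rewrite Rmin_left, Rmax_right in Hc1 by lra.
      assert (I c) by (apply (Hc x c y); auto). apply Hi in Hc2; auto. lra.
    + destruct (Rlt_dec (f y) (f x)); auto. exfalso.
      destruct (ivt2 f I y z (f x) Hc Iy Hz Hf) as [c [Hc1 Hc2]]; [lra|].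
      rewrite Rmin_left, Rmax_right in Hc1 by lra.
      assert (I c) by (apply (Hc y c z); auto). apply Hi in Hc2; auto. lra.
Qed.

Definition incr (I : R -> Prop) (f : R -> R) := forall x y, I x -> I y -> x < y -> f x < f y.
Definition decr (I : R -> Prop) (f : R -> R) := forall x y, I x -> I y -> x < y -> f y < f x.

Lemma inj_mono (f : R -> R) (I : R -> Prop) : conv I -> (forall t, I t -> continuous f t) ->
  injon I f -> incr I f \/ decr I f.
Proof.
  intros Hc Hf Hi.
  assert (S3 : forall x y z, I x -> I z -> x < y < z ->
     (f x < f y <-> f x < f z) /\ (f x < f z <-> f y < f z)).
  { intros x y z Hx Hz Hy. destruct (between f I x y z Hc Hf Hi Hx Hz Hy); split; split; intros; lra. }
  assert (Ne : forall x y, I x -> I y -> x < y -> f x <> f y).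
  { intros x y Hx Hy Hxy E. apply Hi in E; auto. lra. }
  assert (Agree : forall a b c d, I a -> I b -> I c -> I d -> a < b -> c < d -> (f a < f b <-> f c < f d)).
  { intros a b c d Ha Hb Hc' Hd Hab Hcd.
    set (m := Rmax b d). set (l := Rmin a c).
    assert (Im : I m) by (unfold m, Rmax; destruct (Rle_dec b d); auto).
    assert (Il : I l) by (unfold l, Rmin; destruct (Rle_dec a c); auto).
    assert (bm : b <= m) by apply Rmax_l. assert (dm : d <= m) by apply Rmax_r.
    assert (la : l <= a) by apply Rmin_l. assert (lc : l <= c) by apply Rmin_r.
    assert (E1 : f a < f b <-> f a < f m).
    { destruct (Req_dec b m) as [E|E]; [rewrite E; tauto|]. apply (S3 a b m); auto; lra. }
    assert (E2 : f c < f d <-> f c < f m).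
    { destruct (Req_dec d m) as [E|E]; [rewrite E; tauto|]. apply (S3 c d m); auto; lra. }
    assert (E3 : f a < f m <-> f l < f m).
    { destruct (Req_dec l a) as [E|E]; [rewrite E; tauto|]. symmetry. apply (S3 l a m); auto; lra. }
    assert (E4 : f c < f m <-> f l < f m).
    { destruct (Req_dec l c) as [E|E]; [rewrite E; tauto|]. symmetry. apply (S3 l c m); auto; lra. }
    tauto. }
  destruct (classic (exists a b, I a /\ I b /\ a < b /\ f a < f b)) as [[a [b [Ha [Hb [Hab Hf']]]]]|N].
  - left. intros x y Hx Hy Hxy. apply (Agree a b x y); auto.
  - right. intros x y Hx Hy Hxy. assert (~ f x < f y) by (intro; apply N; eauto 10).
    assert (f x <> f y) by auto. lra.
Qed.

Lemma max_interior (f : R -> R) (I : R -> Prop) x y m : conv I -> (forall t, I t -> continuous f t) ->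
  I x -> I y -> x < m < y -> (forall c, x <= c <= y -> f c <= f m) ->
  forall e, 0 < e -> ~ (forall y1 y2, Rabs (y1 - m) < e -> Rabs (y2 - m) < e -> f y1 = f y2 -> y1 = y2).
Proof.
  intros Hc Hf Hx Hy Hm Hmax e He Hinj.
  set (d := Rmin (e / 2) (Rmin ((m - x) / 2) ((y - m) / 2))).
  assert (d1 : d <= e / 2) by apply Rmin_l.
  assert (d2 : d <= (m - x) / 2) by (eapply Rle_trans; [apply Rmin_r| apply Rmin_l]).
  assert (d3 : d <= (y - m) / 2) by (eapply Rle_trans; [apply Rmin_r| apply Rmin_r]).
  assert (d0 : 0 < d) by (unfold d; repeat apply Rmin_pos; lra).
  set (p := m - d). set (q := m + d).
  assert (Ip : I p) by (apply (Hc x p y); auto; unfold p; lra).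
  assert (Iq : I q) by (apply (Hc x q y); auto; unfold q; lra).
  assert (Im : I m) by (apply (Hc x m y); auto; lra).
  assert (Bp : Rabs (p - m) < e) by (unfold p; rewrite Rabs_left; lra).
  assert (Bq : Rabs (q - m) < e) by (unfold q; rewrite Rabs_right; lra).
  assert (Bm : Rabs (m - m) < e) by (rewrite rabs0; lra).
  assert (fp : f p < f m).
  { assert (f p <= f m) by (apply Hmax; unfold p; lra). assert (f p <> f m); [|lra].
    intro E. apply Hinj in E; auto. unfold p in E; lra. }
  assert (fq : f q < f m).
  { assert (f q <= f m) by (apply Hmax; unfold q; lra). assert (f q <> f m); [|lra].
    intro E. apply Hinj in E; auto. unfold q in E; lra. }
  destruct (Rle_dec (f p) (f q)).
  - destruct (ivt2 f I p m (f q) Hc Ip Im Hf) as [c [Hc1 Hc2]]; [lra|].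
    rewrite Rmin_left, Rmax_right in Hc1 by (unfold p; lra).
    apply Hinj in Hc2; auto.
    + unfold q, p in *; lra.
    + unfold p in *. rewrite Rabs_left1; lra.
  - destruct (ivt2 f I m q (f p) Hc Im Iq Hf) as [c [Hc1 Hc2]]; [lra|].
    rewrite Rmin_left, Rmax_right in Hc1 by (unfold q; lra).
    apply Hinj in Hc2; auto.
    + unfold q, p in *; lra.
    + unfold q in *. rewrite Rabs_right; lra.
Qed.

Lemma locinj_inj (f : R -> R) (I : R -> Prop) : conv I -> (forall t, I t -> continuous f t) ->
  (forall x, I x -> exists e, 0 < e /\ forall y1 y2, I y1 -> I y2 -> Rabs (y1 - x) < e -> Rabs (y2 - x) < e ->
      f y1 = f y2 -> y1 = y2) -> injon I f.
Proof.
  intros Hc Hf Hl.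
  assert (Main : forall g : R -> R, (forall t, I t -> continuous g t) ->
     (forall x, I x -> exists e, 0 < e /\ forall y1 y2, I y1 -> I y2 -> Rabs (y1 - x) < e -> Rabs (y2 - x) < e ->
      g y1 = g y2 -> y1 = y2) ->
     forall x y, I x -> I y -> x < y -> g x = g y -> (forall c, x <= c <= y -> g c <= g x)).
  { intros g Hg Hgl x y Hx Hy Hxy E c Hcc.
    destruct (continuity_ab_maj g x y) as [m [Hm1 Hm2]]; [lra| |].
    { intros t Ht. apply cont_cpt. apply Hg. apply (Hc x t y); auto. }
    destruct (Rle_dec (g m) (g x)) as [L|L].
    { apply Rle_trans with (g m); auto. }
    exfalso.
    assert (Hmi : x < m < y).
    { split; destruct (Req_dec m x) as [Em|Em]; try (subst; lra);
      destruct (Req_dec m y) as [Em2|Em2]; try (subst; lra); lra. }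
    assert (Im : I m) by (apply (Hc x m y); auto; lra).
    destruct (Hgl m Im) as [e [He He2]].
    apply (max_interior g I x y m Hc Hg Hx Hy Hmi Hm1 (Rmin e (Rmin (m - x) (y - m)))).
    { repeat apply Rmin_pos; lra. }
    intros y1 y2 B1 B2 Eq.
    assert (Rmin e (Rmin (m - x) (y - m)) <= e) by apply Rmin_l.
    assert (Rmin e (Rmin (m - x) (y - m)) <= m - x) by (eapply Rle_trans; [apply Rmin_r|apply Rmin_l]).
    assert (Rmin e (Rmin (m - x) (y - m)) <= y - m) by (eapply Rle_trans; [apply Rmin_r|apply Rmin_r]).
    apply Rabs_def2 in B1. apply Rabs_def2 in B2.
    apply He2; auto.
    - apply (Hc x y1 y); auto; lra.
    - apply (Hc x y2 y); auto; lra.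
    - apply Rabs_def1; lra.
    - apply Rabs_def1; lra. }
  intros x y Hx Hy E.
  destruct (Rtotal_order x y) as [Hxy|[Hxy|Hxy]]; auto; exfalso.
  - assert (A := Main f Hf Hl x y Hx Hy Hxy E).
    assert (B := Main (fun t => - f t) (fun t Ht => copp f t (Hf t Ht))).
    assert (B2 : forall c, x <= c <= y -> - f c <= - f x).
    { apply B; auto; [|lra]. intros z Hz. destruct (Hl z Hz) as [e [He K]]. exists e; split; auto.
      intros y1 y2 ? ? ? ? ?. apply K; auto; lra. }
    destruct (Hl x Hx) as [e [He K]].
    set (z := x + Rmin (e/2) (y - x) / 2).
    assert (0 < Rmin (e/2) (y - x)) by (apply Rmin_pos; lra).
    assert (Rmin (e/2) (y - x) <= e/2) by apply Rmin_l.
    assert (Rmin (e/2) (y - x) <= y - x) by apply Rmin_r.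
    assert (Ez : f z = f x).
    { assert (f z <= f x) by (apply A; unfold z; lra). assert (- f z <= - f x) by (apply B2; unfold z; lra). lra. }
    apply K in Ez; auto.
    + unfold z in Ez; lra.
    + apply (Hc x z y); auto; unfold z; lra.
    + unfold z; rewrite Rabs_right; lra.
    + rewrite rabs0; lra.
  - symmetry in E.
    assert (A := Main f Hf Hl y x Hy Hx Hxy E).
    assert (B := Main (fun t => - f t) (fun t Ht => copp f t (Hf t Ht))).
    assert (B2 : forall c, y <= c <= x -> - f c <= - f y).
    { apply B; auto; [|lra]. intros z Hz. destruct (Hl z Hz) as [e [He K]]. exists e; split; auto.
      intros y1 y2 ? ? ? ? ?. apply K; auto; lra. }
    destruct (Hl y Hy) as [e [He K]].
    set (z := y + Rmin (e/2) (x - y) / 2).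
    assert (0 < Rmin (e/2) (x - y)) by (apply Rmin_pos; lra).
    assert (Rmin (e/2) (x - y) <= e/2) by apply Rmin_l.
    assert (Rmin (e/2) (x - y) <= x - y) by apply Rmin_r.
    assert (Ez : f z = f y).
    { assert (f z <= f y) by (apply A; unfold z; lra). assert (- f z <= - f y) by (apply B2; unfold z; lra). lra. }
    apply K in Ez; auto.
    + unfold z in Ez; lra.
    + apply (Hc y z x); auto; unfold z; lra.
    + unfold z; rewrite Rabs_right; lra.
    + rewrite rabs0; lra.
Qed.

Lemma sin_nz (k : Z) t : IZR k * PI < t < (IZR k + 1) * PI -> sin t <> 0.
Proof.
  intros H E. apply sin_eq_0_0 in E. destruct E as [j Hj]. subst.
  assert (HP := PI_RGT_0).
  assert (IZR k < IZR j < IZR k + 1) by (split; apply (Rmult_lt_reg_r PI); lra).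
  rewrite <- plus_IZR in H0. destruct H0 as [H1 H2]. apply lt_IZR in H1. apply lt_IZR in H2. lia.
Qed.

Lemma cos_nz (k : Z) t : IZR k * PI - PI / 2 < t < IZR k * PI + PI / 2 -> cos t <> 0.
Proof.
  intros H E. apply cos_eq_0_0 in E. destruct E as [j Hj]. subst.
  assert (HP := PI_RGT_0).
  assert (IZR k - 1 < IZR j < IZR k) by (split; apply (Rmult_lt_reg_r PI); lra).
  rewrite <- minus_IZR in H0. destruct H0 as [H1 H2]. apply lt_IZR in H1. apply lt_IZR in H2. lia.
Qed.

Definition swapm : mat := Mat 0 1 1 0.

Lemma std_chart_D D U phi : std_atlas D (U, phi) -> forall t, U t -> D t.
Proof.
  intros [[k [Hk _]]|[k [Hk _]]] t Ht; apply Hk in Ht; tauto.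
Qed.

Lemma chart_vec D U phi : std_atlas D (U, phi) ->
  exists S, mdet S <> 0 /\ forall t, U t -> par (phi t, 1) (mapp S (vv t)).
Proof.
  intros [[k [Hk Hp]]|[k [Hk Hp]]].
  - exists mid; split; [rewrite mdet_id; lra|]. intros t Ht. rewrite mapp_id, Hp by auto.
    assert (sin t <> 0) by (apply Hk in Ht; apply (sin_nz k); tauto).
    unfold par, cross, vv; simpl. field; auto.
  - exists swapm; split; [unfold mdet, swapm; simpl; lra|]. intros t Ht. rewrite Hp by auto.
    assert (cos t <> 0) by (apply Hk in Ht; apply (cos_nz k); tauto).
    unfold par, cross, vv, mapp, swapm, tan; simpl. field; auto.
Qed.

Lemma open_iff (U D : R -> Prop) a b : open D -> (forall t, U t <-> (D t /\ a < t < b)) -> open U.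
Proof.
  intros HD Hk t Ht. apply Hk in Ht. destruct Ht as [Dt Ht].
  destruct (open_ball D t HD Dt) as [e [He H]].
  apply locally_ball. exists (Rmin e (Rmin (t - a) (b - t))). split; [repeat apply Rmin_pos; lra|].
  intros y Hy. apply Hk.
  assert (Rmin e (Rmin (t - a) (b - t)) <= e) by apply Rmin_l.
  assert (Rmin e (Rmin (t - a) (b - t)) <= t - a) by (eapply Rle_trans; [apply Rmin_r|apply Rmin_l]).
  assert (Rmin e (Rmin (t - a) (b - t)) <= b - t) by (eapply Rle_trans; [apply Rmin_r|apply Rmin_r]).
  split; [apply H; lra|]. apply Rabs_def2 in Hy. lra.
Qed.

Lemma std_is_chart D U phi : open D -> std_atlas D (U, phi) -> is_chart D U phi.
Proof.
  intros HD Hs. assert (HUD := std_chart_D D U phi Hs).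
  destruct Hs as [[k [Hk Hp]]|[k [Hk Hp]]].
  - assert (HU : open U) by (apply (open_iff U D (IZR k * PI) ((IZR k + 1) * PI)); auto).
    split; [auto|split; [auto|split]].
    + intros x Hx. apply (cont_ext_open (fun t => cos t / sin t) phi U x HU Hx).
      { intros y Hy; rewrite Hp; auto. }
      assert (sin x <> 0) by (apply Hk in Hx; apply (sin_nz k); tauto).
      apply cmult; [apply continuous_cos| apply cinv; auto; apply continuous_sin].
    + intros x y Hx Hy E. rewrite !Hp in E by auto.
      assert (sx : sin x <> 0) by (apply Hk in Hx; apply (sin_nz k); tauto).
      assert (sy : sin y <> 0) by (apply Hk in Hy; apply (sin_nz k); tauto).
      apply cong_small.
      * apply Hk in Hx. apply Hk in Hy. apply Rabs_def1; lra.
      * apply cong_sym. apply par_vv_cong. unfold par, cross, vv; simpl.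
        apply (Rmult_eq_reg_r (/ (sin x * sin y))); [|apply Rinv_neq_0_compat; apply Rmult_integral_contrapositive_currified; auto].
        replace ((cos y * sin x - sin y * cos x) * / (sin x * sin y)) with (cos y / sin y - cos x / sin x) by (field; auto).
        lra.
  - assert (HU : open U) by (apply (open_iff U D (IZR k * PI - PI / 2) (IZR k * PI + PI / 2)); auto).
    split; [auto|split; [auto|split]].
    + intros x Hx. apply (cont_ext_open tan phi U x HU Hx).
      { intros y Hy; rewrite Hp; auto. }
      assert (cos x <> 0) by (apply Hk in Hx; apply (cos_nz k); tauto).
      apply continuous_tan; auto.
    + intros x y Hx Hy E. rewrite !Hp in E by auto. unfold tan in E.
      assert (sx : cos x <> 0) by (apply Hk in Hx; apply (cos_nz k); tauto).
      assert (sy : cos y <> 0) by (apply Hk in Hy; apply (cos_nz k); tauto).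
      apply cong_small.
      * apply Hk in Hx. apply Hk in Hy. apply Rabs_def1; lra.
      * apply par_vv_cong. unfold par, cross, vv; simpl.
        apply (Rmult_eq_reg_r (/ (cos x * cos y))); [|apply Rinv_neq_0_compat; apply Rmult_integral_contrapositive_currified; auto].
        replace ((cos x * sin y - sin x * cos y) * / (cos x * cos y)) with (sin y / cos y - sin x / cos x) by (field; auto).
        lra.
Qed.

Lemma up_floor (r : R) : exists k : Z, IZR k <= r < IZR k + 1.
Proof.
  destruct (archimed r) as [H1 H2]. exists (up r - 1)%Z. rewrite minus_IZR. simpl. lra.
Qed.

Lemma std_cover D t : D t -> exists U phi, std_atlas D (U, phi) /\ U t.
Proof.
  intros Dt. assert (HP := PI_RGT_0).
  destruct (up_floor (t / PI)) as [k [Hk1 Hk2]].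
  destruct (Req_dec (IZR k) (t / PI)) as [E|E].
  - exists (fun s => D s /\ IZR k * PI - PI / 2 < s < IZR k * PI + PI / 2), tan.
    split.
    + right. exists k. split; [tauto|auto].
    + split; auto. assert (t = IZR k * PI) by (rewrite E; field; lra). lra.
  - exists (fun s => D s /\ IZR k * PI < s < (IZR k + 1) * PI), (fun s => cos s / sin s).
    split.
    + left. exists k. split; [tauto|auto].
    + split; auto.
      assert (IZR k < t / PI) by lra.
      split.
      * apply (Rmult_lt_reg_r (/ PI)); [apply Rinv_0_lt_compat; lra|]. 
        replace (IZR k * PI * / PI) with (IZR k) by (field; lra). auto.
      * apply (Rmult_lt_reg_r (/ PI)); [apply Rinv_0_lt_compat; lra|]. 
        replace ((IZR k + 1) * PI * / PI) with (IZR k + 1) by (field; lra). auto.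
Qed.

Lemma rel_homog W phi psi : rel W (fun y => (phi y, 1)) (fun y => (psi y, 1)) -> loc_homog W phi psi.
Proof.
  intros H x Hx. destruct (H x Hx) as [e [He [[a b c d] [HM K]]]].
  exists e; split; auto. exists a, b, c, d. split; [unfold mdet in HM; simpl in HM; auto|].
  intros y Hy Hyx. specialize (K y Hy Hyx). unfold par, cross, mapp in K; simpl in K.
  assert (c * phi y + d <> 0).
  { intro E. assert (a * phi y + b = 0) by nra.
    unfold mdet in HM; simpl in HM. apply HM.
    assert (E1 : (a * d - b * c) * 1 = a * (c * phi y + d) - c * (a * phi y + b)) by ring.
    rewrite E, H0 in E1. lra. }
  split; auto. field_simplify_eq; auto. lra.
Qed.

Lemma homog_rel W phi psi : loc_homog W phi psi -> rel W (fun y => (phi y, 1)) (fun y => (psi y, 1)).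
Proof.
  intros H x Hx. destruct (H x Hx) as [e [He [a [b [c [d [HM K]]]]]]].
  exists e; split; auto. exists (Mat a b c d). split; [unfold mdet; simpl; auto|].
  intros y Hy Hyx. destruct (K y Hy Hyx) as [K1 K2]. unfold par, cross, mapp; simpl.
  rewrite K2. field; auto.
Qed.

Lemma std_proj_atlas D : open D -> is_proj_atlas D (std_atlas D).
Proof.
  intros HD. split; [|split].
  - intros U phi Hs. apply std_is_chart; auto.
  - intros x Dx. apply std_cover; auto.
  - intros U phi V psi H1 H2. apply rel_homog.
    destruct (chart_vec D U phi H1) as [S1 [HS1 K1]].
    destruct (chart_vec D V psi H2) as [S2 [HS2 K2]].
    apply rel_trans with (fun y => vv y).
    + intros; apply nz_vv.
    + apply rel_sym. apply (rel_const _ _ _ S1); auto. intros y [Hy _]; auto.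
    + apply (rel_const _ _ _ S2); auto. intros y [_ Hy]; auto.
Qed.

Lemma iso_of_lift (D1 D2 : R -> Prop) (f g : R -> R) M :
  (forall x, D1 x -> D2 (f x)) -> (forall y, D2 y -> D1 (g y)) ->
  (forall x, D1 x -> g (f x) = x) -> (forall y, D2 y -> f (g y) = y) ->
  (forall x, D1 x -> continuous f x) -> (forall y, D2 y -> continuous g y) ->
  mdet M <> 0 -> (forall x, D1 x -> par (vv (f x)) (mapp M (vv x))) ->
  proj_iso D1 (std_atlas D1) D2 (std_atlas D2).
Proof.
  intros H1 H2 H3 H4 H5 H6 HM HL.
  exists f, g. split; [exact H1|]. split; [exact H2|]. split; [exact H3|]. split; [exact H4|]. split; [exact H5|]. split; [exact H6|].
  intros U phi V psi HU HV. apply rel_homog.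
  destruct (chart_vec D1 U phi HU) as [S1 [HS1 K1]].
  destruct (chart_vec D2 V psi HV) as [S2 [HS2 K2]].
  apply rel_trans with (fun y => vv y); [intros; apply nz_vv| |].
  { apply rel_sym. apply (rel_const _ _ _ S1); auto. intros y [Hy _]; auto. }
  apply rel_trans with (fun y => vv (f y)); [intros; apply nz_vv| |].
  { apply (rel_const _ _ _ M); auto. intros y [Hy _]. apply HL. apply (std_chart_D D1 U phi HU); auto. }
  apply (rel_const _ _ _ S2); auto. intros y [_ Hy]; auto.
Qed.

Lemma lift_of_iso (D1 D2 : R -> Prop) (f : R -> R) : open D1 -> open D2 ->
  (forall x, D1 x -> D2 (f x)) -> (forall x, D1 x -> continuous f x) ->
  (forall U phi V psi, std_atlas D1 (U, phi) -> std_atlas D2 (V, psi) ->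
       loc_homog (fun y => U y /\ V (f y)) phi (fun y => psi (f y))) ->
  rel D1 (fun y => vv y) (fun y => vv (f y)).
Proof.
  intros HD1 HD2 Hf Hc Hh. apply rel_loc. intros x Hx.
  destruct (std_cover D1 x Hx) as [U [phi [HU Ux]]].
  destruct (std_cover D2 (f x) (Hf x Hx)) as [V [psi [HV Vx]]].
  destruct (std_is_chart D1 U phi HD1 HU) as [oU _].
  destruct (std_is_chart D2 V psi HD2 HV) as [oV _].
  destruct (open_ball U x oU Ux) as [e1 [He1 K1]].
  destruct (cont_preim f x V (Hc x Hx) oV Vx) as [e2 [He2 K2]].
  exists (Rmin e1 e2); split; [apply Rmin_pos; auto|].
  assert (Sub : forall y, D1 y /\ Rabs (y - x) < Rmin e1 e2 -> U y /\ V (f y)).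
  { intros y [_ Hy]. split; [apply K1| apply K2]; apply Rlt_le_trans with (1 := Hy); [apply Rmin_l|apply Rmin_r]. }
  apply rel_mono with (1 := Sub).
  destruct (chart_vec D1 U phi HU) as [S1 [HS1 L1]].
  destruct (chart_vec D2 V psi HV) as [S2 [HS2 L2]].
  apply rel_trans with (fun y => (phi y, 1)); [intros; apply nz_phi1| |].
  { apply (rel_const _ _ _ S1); auto. intros y [Hy _]. auto. }
  apply rel_trans with (fun y => (psi (f y), 1)); [intros; apply nz_phi1| |].
  { apply homog_rel. apply Hh; auto. }
  apply rel_sym. apply (rel_const _ _ _ S2); auto. intros y [_ Hy]; auto.
Qed.

Lemma ND_vv I : ND I (fun y => vv y).
Proof.
  intros c d Hcd _. assert (HP := PI_RGT_0).
  set (h := Rmin (d - c) PI / 4).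
  assert (h0 : 0 < h) by (unfold h; assert (0 < Rmin (d - c) PI) by (apply Rmin_pos; lra); lra).
  assert (h1 : 4 * h <= d - c) by (unfold h; assert (Rmin (d - c) PI <= d - c) by apply Rmin_l; lra).
  assert (h2 : 4 * h <= PI) by (unfold h; assert (Rmin (d - c) PI <= PI) by apply Rmin_r; lra).
  assert (NP : forall s t, 0 < t - s < PI -> ~ par (vv s) (vv t)).
  { intros s t Hst P. apply par_vv_cong in P. apply cong_small in P; [lra|]. apply Rabs_def1; lra. }
  exists (c + h), (c + 2 * h), (c + 3 * h). repeat split; try lra; apply NP; lra.
Qed.

Definition LI (D1 D2 : R -> Prop) (f g : R -> R) (M : mat) : Prop :=
  (forall x, D1 x -> D2 (f x)) /\ (forall y, D2 y -> D1 (g y)) /\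
  (forall x, D1 x -> g (f x) = x) /\ (forall y, D2 y -> f (g y) = y) /\
  (forall x, D1 x -> continuous f x) /\ (forall y, D2 y -> continuous g y) /\
  mdet M <> 0 /\ (forall x, D1 x -> par (vv (f x)) (mapp M (vv x))).

Lemma LI_of_iso D1 D2 : open D1 -> open D2 -> conv D1 -> (exists x, D1 x) ->
  proj_iso D1 (std_atlas D1) D2 (std_atlas D2) -> exists f g M, LI D1 D2 f g M.
Proof.
  intros o1 o2 c1 [x0 Hx0] [f [g [H1 [H2 [H3 [H4 [H5 [H6 H7]]]]]]]].
  assert (Hr := lift_of_iso D1 D2 f o1 o2 H1 H5 H7).
  destruct (rigid D1 (fun y => vv y) (fun y => vv (f y)) x0 c1) as [M [HM K]]; auto.
  { intros; apply nz_vv. } { intros; apply nz_vv. } { apply ND_vv. }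
  exists f, g, M. repeat split; auto.
Qed.

Lemma LI_sym D1 D2 f g M : LI D1 D2 f g M -> LI D2 D1 g f (madj M).
Proof.
  intros [H1 [H2 [H3 [H4 [H5 [H6 [HM K]]]]]]].
  repeat split; auto. { rewrite mdet_adj; auto. }
  intros y Hy. apply par_adj; auto. rewrite <- (H4 y Hy) at 1. apply K. auto.
Qed.

Lemma LI_cong D1 D2 f g M x y : LI D1 D2 f g M -> D1 x -> D1 y ->
  (cong (f x) (f y) <-> cong x y).
Proof.
  intros [H1 [H2 [H3 [H4 [H5 [H6 [HM K]]]]]]] Hx Hy.
  rewrite <- !par_vv_cong. split; intros P.
  - apply (par_mapp_inv M); auto.
    apply par_trans with (vv (f x)); [apply nz_vv| apply par_sym; auto|].
    apply par_trans with (vv (f y)); [apply nz_vv| auto| auto].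
  - apply par_trans with (mapp M (vv x)); [apply nz_mapp; auto; apply nz_vv| auto|].
    apply par_trans with (mapp M (vv y)); [apply nz_mapp; auto; apply nz_vv| apply par_mapp; auto|].
    apply par_sym; auto.
Qed.

Lemma cong_pi t : cong (t + PI) t.
Proof. exists 1%Z. simpl. ring. Qed.

Lemma LI_shift D1 D2 f g M : conv D1 -> conv D2 -> LI D1 D2 f g M ->
  (forall t, D1 t -> D1 (t + PI) -> f (t + PI) = f t + PI) \/
  (forall t, D1 t -> D1 (t + PI) -> f (t + PI) = f t - PI).
Proof.
  intros c1 c2 HL. assert (HL' := HL). destruct HL' as [H1 [H2 [H3 [H4 [H5 [H6 [HM K]]]]]]].
  assert (HP := PI_RGT_0).
  assert (inj : injon D1 f).
  { intros x y Hx Hy E. rewrite <- (H3 x Hx), <- (H3 y Hy), E; auto. }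
  assert (Gen : forall t, D1 t -> D1 (t + PI) -> exists j : Z, f (t + PI) - f t = IZR j * PI /\ j <> 0%Z
     /\ forall s, D2 s -> ~ cong s (f t) -> True).
  { intros t Ht Ht2. destruct (proj2 (LI_cong D1 D2 f g M (t + PI) t HL Ht2 Ht) (cong_pi t)) as [j Hj].
    exists j; split; auto. split; auto. intro E; subst. simpl in Hj.
    assert (f (t + PI) = f t) by lra. apply inj in H; auto; lra. }
  assert (NoMid : forall t s, D1 t -> D1 (t + PI) -> D2 s ->
     ((f t < s < f (t + PI)) \/ (f (t + PI) < s < f t)) -> ~ cong s (f t)).
  { intros t s Ht Ht2 Hs Hb C.
    set (u := g s). assert (Du : D1 u) by (apply H2; auto). assert (Eu : f u = s) by (apply H4; auto).
    rewrite <- Eu in C. apply (LI_cong D1 D2 f g M u t HL Du Ht) in C.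
    destruct (inj_mono f D1 c1 H5 inj) as [I|I].
    - assert (f t < f (t + PI)) by (apply I; auto; lra).
      assert (t < u < t + PI).
      { split.
        - destruct (Rlt_le_dec t u) as [L|L]; auto. destruct L as [L|L].
          + assert (f u < f t) by (apply I; auto). lra.
          + assert (f u = f t) by (f_equal; lra). lra.
        - destruct (Rlt_le_dec u (t + PI)) as [L|L]; auto. destruct L as [L|L].
          + assert (f (t + PI) < f u) by (apply I; auto). lra.
          + assert (f u = f (t + PI)) by (f_equal; lra). lra. }
      apply cong_small in C; [lra|]. apply Rabs_def1; lra.
    - assert (f (t + PI) < f t) by (apply I; auto; lra).
      assert (t < u < t + PI).
      { split.
        - destruct (Rlt_le_dec t u) as [L|L]; auto. destruct L as [L|L].
          + assert (f t < f u) by (apply I; auto). lra.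
          + assert (f u = f t) by (f_equal; lra). lra.
        - destruct (Rlt_le_dec u (t + PI)) as [L|L]; auto. destruct L as [L|L].
          + assert (f u < f (t + PI)) by (apply I; auto). lra.
          + assert (f u = f (t + PI)) by (f_equal; lra). lra. }
      apply cong_small in C; [lra|]. apply Rabs_def1; lra. }
  assert (Step : forall t, D1 t -> D1 (t + PI) -> f (t + PI) = f t + PI \/ f (t + PI) = f t - PI).
  { intros t Ht Ht2. destruct (Gen t Ht Ht2) as [j [Hj [Hj0 _]]].
    destruct (Z_lt_le_dec 1 j) as [L|L].
    - exfalso. assert (2 <= IZR j) by (apply IZR_le; lia).
      apply (NoMid t (f t + PI)); auto.
      + apply (c2 (f t) (f t + PI) (f (t + PI))); auto; nra.
      + left; nra.
      + exists 1%Z; simpl; ring.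
    - destruct (Z_lt_le_dec j (-1)) as [L2|L2].
      + exfalso. assert (IZR j <= -2) by (apply IZR_le; lia).
        apply (NoMid t (f t - PI)); auto.
        * apply (c2 (f (t + PI)) (f t - PI) (f t)); auto; nra.
        * right; nra.
        * exists (-1)%Z; simpl; ring.
      + assert (j = 1 \/ j = -1)%Z as [E|E] by lia; subst; simpl in Hj; [left|right]; lra. }
  destruct (inj_mono f D1 c1 H5 inj) as [I|I].
  - left. intros t Ht Ht2. destruct (Step t Ht Ht2) as [E|E]; auto.
    assert (f t < f (t + PI)) by (apply I; auto; lra). lra.
  - right. intros t Ht Ht2. destruct (Step t Ht Ht2) as [E|E]; auto.
    assert (f (t + PI) < f t) by (apply I; auto; lra). lra.
Qed.

Lemma LI_shift_n D1 D2 f g M : conv D1 -> conv D2 -> LI D1 D2 f g M ->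
  (forall t n, D1 t -> D1 (t + INR n * PI) -> f (t + INR n * PI) = f t + INR n * PI) \/
  (forall t n, D1 t -> D1 (t + INR n * PI) -> f (t + INR n * PI) = f t - INR n * PI).
Proof.
  intros c1 c2 HL. assert (HP := PI_RGT_0).
  assert (Mid : forall t n, D1 t -> D1 (t + INR (S n) * PI) -> D1 (t + INR n * PI)).
  { intros t n Ht Hn. apply (c1 t _ (t + INR (S n) * PI)); auto. rewrite S_INR.
    assert (0 <= INR n) by apply pos_INR. nra. }
  destruct (LI_shift D1 D2 f g M c1 c2 HL) as [Sh|Sh]; [left|right]; intros t n; induction n; intros Ht Hn.
  - simpl. rewrite Rmult_0_l, !Rplus_0_r; auto.
  - assert (Dn := Mid t n Ht Hn).
    replace (t + INR (S n) * PI) with ((t + INR n * PI) + PI) by (rewrite S_INR; ring).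
    rewrite Sh; auto. 2:{ replace (t + INR n * PI + PI) with (t + INR (S n) * PI) by (rewrite S_INR; ring); auto. }
    rewrite IHn; auto. rewrite S_INR; ring.
  - simpl. rewrite Rmult_0_l, Rplus_0_r, Rminus_0_r; auto.
  - assert (Dn := Mid t n Ht Hn).
    replace (t + INR (S n) * PI) with ((t + INR n * PI) + PI) by (rewrite S_INR; ring).
    rewrite Sh; auto. 2:{ replace (t + INR n * PI + PI) with (t + INR (S n) * PI) by (rewrite S_INR; ring); auto. }
    rewrite IHn; auto. rewrite S_INR; ring.
Qed.

Lemma nat_big (X : R) : exists n : nat, X < INR n * PI.
Proof.
  assert (HP := PI_RGT_0). destruct (up_floor (X / PI)) as [k [Hk1 Hk2]].
  exists (Z.to_nat (Z.abs k + 1)). rewrite INR_IZR_INZ, Z2Nat.id by lia.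
  rewrite plus_IZR, abs_IZR. simpl.
  assert (X / PI < Rabs (IZR k) + 1) by (assert (IZR k <= Rabs (IZR k)) by apply Rle_abs; lra).
  apply (Rmult_lt_compat_r PI) in H; auto. unfold Rdiv in H. rewrite Rmult_assoc, Rinv_l, Rmult_1_r in H; lra.
Qed.

Lemma LI_unb_fwd D1 D2 f g M t : conv D1 -> conv D2 -> LI D1 D2 f g M -> D1 t ->
  (forall n, D1 (t + INR n * PI)) ->
  (forall n, D2 (f t + INR n * PI)) \/ (forall n, D2 (f t - INR n * PI)).
Proof.
  intros c1 c2 HL Ht Hn. assert (HL' := HL). destruct HL' as [H1 _].
  destruct (LI_shift_n D1 D2 f g M c1 c2 HL) as [Sh|Sh]; [left|right]; intros n;
    rewrite <- Sh; auto.
Qed.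

Lemma LI_unb_bwd D1 D2 f g M t : conv D1 -> conv D2 -> LI D1 D2 f g M -> D1 t ->
  (forall n, D1 (t - INR n * PI)) ->
  (forall n, D2 (f t - INR n * PI)) \/ (forall n, D2 (f t + INR n * PI)).
Proof.
  intros c1 c2 HL Ht Hn. assert (HL' := HL). destruct HL' as [H1 _].
  destruct (LI_shift_n D1 D2 f g M c1 c2 HL) as [Sh|Sh]; [left|right]; intros n.
  - assert (E := Sh (t - INR n * PI) n (Hn n)).
    replace (t - INR n * PI + INR n * PI) with t in E by ring.
    specialize (E Ht). replace (f t - INR n * PI) with (f (t - INR n * PI)) by lra. apply H1; auto.
  - assert (E := Sh (t - INR n * PI) n (Hn n)).
    replace (t - INR n * PI + INR n * PI) with t in E by ring.
    specialize (E Ht). replace (f t + INR n * PI) with (f (t - INR n * PI)) by lra. apply H1; auto.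
Qed.

Lemma no_up_unb (P : R -> Prop) (b c : R) : (forall x, P x -> x < b) -> ~ (forall n, P (c + INR n * PI)).
Proof.
  intros H N. destruct (nat_big (b - c)) as [n Hn]. specialize (H _ (N n)). lra.
Qed.
Lemma no_down_unb (P : R -> Prop) (a c : R) : (forall x, P x -> a < x) -> ~ (forall n, P (c - INR n * PI)).
Proof.
  intros H N. destruct (nat_big (c - a)) as [n Hn]. specialize (H _ (N n)). lra.
Qed.

Definition Chain (n : nat) (D : R -> Prop) : Prop := exists s, D s /\ D (s + INR n * PI).
Definition Bad (n : nat) (D : R -> Prop) (t : R) : Prop := ~ exists s, D s /\ D (s + INR n * PI) /\ cong s t.
Definition TwoBad (n : nat) (D : R -> Prop) : Prop := exists t1 t2, ~ cong t1 t2 /\ Bad n D t1 /\ Bad n D t2.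

Lemma Chain_tr D1 D2 f g M n : conv D1 -> conv D2 -> LI D1 D2 f g M -> Chain n D1 -> Chain n D2.
Proof.
  intros c1 c2 HL [s [Hs Hs2]]. assert (HL' := HL). destruct HL' as [H1 _].
  destruct (LI_shift_n D1 D2 f g M c1 c2 HL) as [Sh|Sh].
  - exists (f s). split; auto. rewrite <- Sh; auto.
  - exists (f (s + INR n * PI)). split; auto. rewrite Sh; auto. replace (f s - INR n * PI + INR n * PI) with (f s) by ring. auto.
Qed.

Lemma angle_exists (w : vec) : nz w -> exists th, par (vv th) w.
Proof.
  destruct w as [w1 w2]; unfold nz; simpl; intros Hw.
  destruct (Req_dec w2 0) as [E|E].
  - exists 0. unfold par, cross, vv; simpl. rewrite cos_0, sin_0, E. ring.
  - exists (PI / 2 - atan (w1 / w2)). unfold par, cross, vv; simpl.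
    rewrite cos_shift, sin_shift, sin_atan, cos_atan.
    assert (0 < sqrt (1 + (w1 / w2)²)) by (apply sqrt_lt_R0; unfold Rsqr; nra).
    field. split; lra.
Qed.

Lemma Bad_tr D1 D2 f g M n t t' : conv D1 -> conv D2 -> LI D1 D2 f g M -> Bad n D1 t ->
  par (vv t') (mapp M (vv t)) -> Bad n D2 t'.
Proof.
  intros c1 c2 HL Hb Ht' [s' [Hs [Hs2 C]]]. apply Hb.
  assert (HL2 := LI_sym D1 D2 f g M HL). assert (HL2' := HL2).
  destruct HL2' as [G1 [G2 [G3 [G4 [G5 [G6 [HM K]]]]]]]. rewrite mdet_adj in HM.
  assert (Cg : forall z, D2 z -> cong z t' -> cong (g z) t).
  { intros z Hz Cz. apply par_vv_cong. apply par_vv_cong in Cz.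
    assert (P1 : par (vv (g z)) (mapp (madj M) (vv z))) by auto.
    assert (P2 : par (mapp (madj M) (vv z)) (mapp (madj M) (vv t'))) by (apply par_mapp; auto).
    assert (P3 : par (mapp (madj M) (vv t')) (mapp (madj M) (mapp M (vv t)))) by (apply par_mapp; auto).
    rewrite mapp_adj in P3.
    apply par_trans with (mapp (madj M) (vv z)); [apply nz_mapp; [rewrite mdet_adj; auto| apply nz_vv]|auto|].
    apply par_trans with (mapp (madj M) (vv t')); [apply nz_mapp; [rewrite mdet_adj; auto| apply nz_vv]|auto|].
    apply (par_scal_r _ _ (mdet M)); auto. }
  destruct (LI_shift_n D2 D1 g f (madj M) c2 c1 HL2) as [Sh|Sh].
  - exists (g s'). split; auto. split; [rewrite <- Sh; auto|]. apply Cg; auto.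
  - exists (g (s' + INR n * PI)). split; auto. split.
    + rewrite Sh; auto. replace (g s' - INR n * PI + INR n * PI) with (g s') by ring. auto.
    + rewrite Sh; auto. apply cong_trans with (g s'); [|apply Cg; auto].
      exists (- Z.of_nat n)%Z. rewrite opp_IZR, <- INR_IZR_INZ. ring.
Qed.

Lemma TwoBad_tr D1 D2 f g M n : conv D1 -> conv D2 -> LI D1 D2 f g M -> TwoBad n D1 -> TwoBad n D2.
Proof.
  intros c1 c2 HL [t1 [t2 [N [B1 B2]]]]. assert (HL' := HL).
  destruct HL' as [_ [_ [_ [_ [_ [_ [HM _]]]]]]].
  destruct (angle_exists (mapp M (vv t1))) as [u1 Hu1]; [apply nz_mapp; auto; apply nz_vv|].
  destruct (angle_exists (mapp M (vv t2))) as [u2 Hu2]; [apply nz_mapp; auto; apply nz_vv|].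
  exists u1, u2. split; [|split; [apply (Bad_tr D1 D2 f g M n t1 u1)|apply (Bad_tr D1 D2 f g M n t2 u2)]; auto].
  intro C. apply N. apply par_vv_cong. apply par_vv_cong in C. apply (par_mapp_inv M); auto.
  apply par_trans with (vv u1); [apply nz_vv| apply par_sym; auto|].
  apply par_trans with (vv u2); [apply nz_vv| auto| auto].
Qed.

Lemma Chain_oint a b n : (Chain n (oint a b) <-> INR n * PI < b - a).
Proof.
  assert (HP := PI_RGT_0). assert (0 <= INR n) by apply pos_INR.
  unfold Chain, oint. split.
  - intros [s [H1 H2]]. lra.
  - intros Hn. exists (a + (b - a - INR n * PI) / 2). split; split; nra.
Qed.

Lemma TwoBad_int a m : ~ TwoBad m (oint a (a + INR (S m) * PI)).
Proof.
  assert (HP := PI_RGT_0). rewrite S_INR.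
  assert (Key : forall t, Bad m (oint a (a + (INR m + 1) * PI)) t -> cong t a).
  { intros t Hb. apply NNPP. intro N. apply Hb.
    destruct (up_floor ((t - a) / PI)) as [j [Hj1 Hj2]].
    set (s := t - IZR j * PI).
    assert (a <= s < a + PI).
    { unfold s. split.
      - apply (Rmult_le_compat_r PI) in Hj1; [|lra]. unfold Rdiv in Hj1.
        rewrite Rmult_assoc, Rinv_l, Rmult_1_r in Hj1; lra.
      - apply (Rmult_lt_compat_r PI) in Hj2; [|lra]. unfold Rdiv in Hj2.
        rewrite Rmult_assoc, Rinv_l, Rmult_1_r in Hj2; lra. }
    assert (s <> a). { intro E. apply N. exists j. unfold s in E. lra. }
    assert (0 <= INR m * PI) by (apply Rmult_le_pos; [apply pos_INR|lra]).
    exists s. unfold oint. split; [lra|]. split; [lra|]. exists (- j)%Z. rewrite opp_IZR. unfold s. ring. }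
  intros [t1 [t2 [N [B1 B2]]]]. apply N. apply cong_trans with a; auto. apply cong_sym; auto.
Qed.

Lemma TwoBad_half a b k : INR k * PI < b - a < (INR k + 1) * PI -> TwoBad k (oint a b).
Proof.
  intros Hk. assert (HP := PI_RGT_0).
  set (t1 := b - INR k * PI). set (t2 := (t1 + a + PI) / 2).
  assert (Badt : forall t, t1 <= t < a + PI -> Bad k (oint a b) t).
  { intros t Ht [s [Hs [Hs2 [j Hj]]]]. unfold oint in *.
    assert (IZR j * PI > - PI) by lra.
    assert (-1 < IZR j) by (apply (Rmult_lt_reg_r PI); lra).
    assert (0 <= IZR j) by (apply IZR_le; apply lt_IZR in H0; lia).
    assert (0 <= IZR j * PI) by nra. unfold t1 in Ht. lra. }
  exists t1, t2. split; [|split; apply Badt; unfold t2, t1; lra].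
  intro C. apply cong_sym in C. apply cong_small in C; [unfold t2, t1 in C; lra|].
  apply Rabs_def1; unfold t2, t1; lra.
Qed.

Lemma dbl_atan x : cos (2 * atan x) = (1 - x * x) / (1 + x * x) /\ sin (2 * atan x) = 2 * x / (1 + x * x).
Proof.
  rewrite cos_2a, sin_2a, cos_atan, sin_atan.
  assert (Hp : 0 < 1 + x²) by (pose proof (Rle_0_sqr x); lra).
  assert (Hs : 0 < sqrt (1 + x²)) by (apply sqrt_lt_R0; auto).
  assert (E : sqrt (1 + x²) * sqrt (1 + x²) = 1 + x * x) by (rewrite sqrt_sqrt by lra; unfold Rsqr; lra).
  split.
  - replace (1 / sqrt (1 + x²) * (1 / sqrt (1 + x²)) - x / sqrt (1 + x²) * (x / sqrt (1 + x²)))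
      with ((1 - x * x) / (sqrt (1 + x²) * sqrt (1 + x²))) by (field; lra).
    rewrite E; auto.
  - replace (2 * (x / sqrt (1 + x²)) * (1 / sqrt (1 + x²)))
      with (2 * x / (sqrt (1 + x²) * sqrt (1 + x²))) by (field; lra).
    rewrite E; auto.
Qed.

Lemma alg_lift (c s w1 w2 N : R) : c * c + s * s = 1 -> N * N = w1 * w1 + w2 * w2 -> 0 < N ->
  0 < N + (c * w1 + s * w2) ->
  let d := c * w1 + s * w2 in let cr := c * w2 - s * w1 in let x := cr / (N + d) in
  (1 - x * x) / (1 + x * x) = d / N /\ 2 * x / (1 + x * x) = cr / N.
Proof.
  intros Hc HN HN0 Hd d cr x.
  assert (E : cr * cr = N * N - d * d).
  { assert (E0 : cr * cr + d * d = (c * c + s * s) * (w1 * w1 + w2 * w2)) by (unfold cr, d; ring).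
    rewrite Hc, <- HN in E0. lra. }
  assert (Hnd : N + d <> 0) by (unfold d; lra).
  assert (E1 : 1 + x * x = 2 * N / (N + d)).
  { unfold x. field_simplify_eq; auto. replace (cr ^ 2) with (cr * cr) by ring. rewrite E. ring. }
  assert (Hx : 1 + x * x <> 0) by (rewrite E1; apply Rgt_not_eq; unfold Rdiv; apply Rmult_gt_0_compat; [lra|apply Rinv_0_lt_compat; unfold d; lra]).
  split.
  - replace ((1 - x * x) / (1 + x * x)) with (2 / (1 + x * x) - 1) by (field; auto).
    rewrite E1. field. split; lra.
  - rewrite E1. unfold x. field. split; lra.
Qed.

Lemma lift_formula (t w1 w2 : R) :
  let N := sqrt (w1 * w1 + w2 * w2) in
  let d := cos t * w1 + sin t * w2 in let cr := cos t * w2 - sin t * w1 in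
  0 < N -> 0 < N + d ->
  cos (t + 2 * atan (cr / (N + d))) = w1 / N /\ sin (t + 2 * atan (cr / (N + d))) = w2 / N.
Proof.
  intros N d cr HN Hd.
  assert (Hc : cos t * cos t + sin t * sin t = 1) by (assert (H := sin2_cos2 t); unfold Rsqr in H; lra).
  assert (HNN : N * N = w1 * w1 + w2 * w2) by (unfold N; rewrite sqrt_sqrt; nra).
  destruct (alg_lift (cos t) (sin t) w1 w2 N Hc HNN HN Hd) as [A B].
  destruct (dbl_atan (cr / (N + d))) as [C S].
  fold d cr in A, B. rewrite cos_plus, sin_plus, C, S, A, B.
  split; field_simplify_eq; try lra; unfold d, cr.
  - replace w1 with ((cos t * cos t + sin t * sin t) * w1) at 3 by (rewrite Hc; ring). ring.
  - replace w2 with ((cos t * cos t + sin t * sin t) * w2) at 3 by (rewrite Hc; ring). ring.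
Qed.

Definition rot (c : R) : mat := Mat (cos c) (- sin c) (sin c) (cos c).
Lemma vv_shift c x : vv (x + c) = mapp (rot c) (vv x).
Proof. unfold vv, rot, mapp; simpl. rewrite cos_plus, sin_plus. f_equal; ring. Qed.
Lemma mdet_rot c : mdet (rot c) = 1.
Proof. unfold mdet, rot; simpl. assert (H := sin2_cos2 c). unfold Rsqr in H. lra. Qed.
Definition refl (c : R) : mat := Mat (cos c) (sin c) (sin c) (- cos c).
Lemma vv_refl c x : vv (c - x) = mapp (refl c) (vv x).
Proof. unfold vv, refl, mapp; simpl. rewrite cos_minus, sin_minus. f_equal; ring. Qed.
Lemma mdet_refl c : mdet (refl c) = -1.
Proof. unfold mdet, refl; simpl. assert (H := sin2_cos2 c). unfold Rsqr in H. lra. Qed.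

Lemma ang_eq a b : cos a = cos b -> sin a = sin b -> Rabs (a - b) < 2 * PI -> a = b.
Proof.
  intros Hc Hs Hab. assert (HP := PI_RGT_0).
  assert (S0 : sin (a - b) = 0) by (rewrite sin_minus, Hc, Hs; ring).
  assert (C1 : cos (a - b) = 1).
  { rewrite cos_minus, Hc, Hs. assert (H := sin2_cos2 b). unfold Rsqr in H. lra. }
  apply sin_eq_0_0 in S0. destruct S0 as [j Hj].
  rewrite Hj in Hab, C1. rewrite Rabs_mult, (Rabs_right PI) in Hab by lra.
  assert (Rabs (IZR j) < 2) by (apply (Rmult_lt_reg_r PI); lra).
  rewrite <- abs_IZR in H. apply lt_IZR in H.
  assert (j = 0 \/ j = 1 \/ j = -1)%Z as [E|[E|E]] by lia; subst; simpl in *.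
  - lra.
  - rewrite Rmult_1_l, cos_PI in C1. lra.
  - replace (-1 * PI) with (- PI) in C1 by ring. rewrite cos_neg, cos_PI in C1. lra.
Qed.

Definition Mpar (mu : R) : mat := Mat 1 mu 0 1.
Definition w1f (mu t : R) := cos t + mu * sin t.
Definition Nf (mu t : R) := sqrt (w1f mu t * w1f mu t + sin t * sin t).
Definition df (mu t : R) := cos t * w1f mu t + sin t * sin t.
Definition crf (mu t : R) := cos t * sin t - sin t * w1f mu t.
Definition Fp (mu t : R) := t + 2 * atan (crf mu t / (Nf mu t + df mu t)).

Lemma cs1 t : cos t * cos t + sin t * sin t = 1.
Proof. assert (H := sin2_cos2 t). unfold Rsqr in H. lra. Qed.

Lemma Nf_pos mu t : 0 < Nf mu t.
Proof.
  unfold Nf. apply sqrt_lt_R0. assert (H := cs1 t). unfold w1f.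
  destruct (Req_dec (sin t) 0) as [E|E].
  - rewrite E. rewrite E in H. nra.
  - assert (0 < sin t * sin t) by (apply Rsqr_pos_lt in E; unfold Rsqr in E; auto).
    pose proof (Rle_0_sqr (cos t + mu * sin t)); unfold Rsqr in *; lra.
Qed.

Lemma NN mu t : Nf mu t * Nf mu t = w1f mu t * w1f mu t + sin t * sin t.
Proof. unfold Nf. rewrite sqrt_sqrt; [auto| nra]. Qed.

Lemma Nd_pos mu t : 0 < Nf mu t + df mu t.
Proof.
  assert (HN := Nf_pos mu t). assert (HNN := NN mu t). assert (Hc := cs1 t).
  assert (E : crf mu t * crf mu t + df mu t * df mu t = Nf mu t * Nf mu t).
  { rewrite HNN. unfold crf, df. replace (w1f mu t * w1f mu t + sin t * sin t) with
      ((cos t * cos t + sin t * sin t) * (w1f mu t * w1f mu t + sin t * sin t)) by (rewrite Hc; ring). ring. }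
  destruct (Rlt_le_dec 0 (Nf mu t + df mu t)) as [L|L]; auto. exfalso.
  assert (df mu t * df mu t >= Nf mu t * Nf mu t) by nra.
  assert (Ecr : crf mu t * crf mu t = 0) by nra.
  assert (Ecr2 : crf mu t = 0) by nra.
  unfold crf, w1f in Ecr2. assert (Ms : mu * sin t * sin t = 0) by lra.
  assert (Ed : df mu t = 1).
  { unfold df, w1f. assert (mu * sin t = 0).
    { apply Rmult_integral in Ms. destruct Ms as [Ms|Ms]; auto. rewrite Ms; ring. }
    replace (cos t * (cos t + mu * sin t) + sin t * sin t) with (cos t * cos t + sin t * sin t + cos t * (mu * sin t)) by ring.
    rewrite H0, Hc; ring. }
  lra.
Qed.

Lemma Fp_vv mu t : cos (Fp mu t) = w1f mu t / Nf mu t /\ sin (Fp mu t) = sin t / Nf mu t.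
Proof.
  unfold Fp. apply (lift_formula t (w1f mu t) (sin t)); [apply Nf_pos| apply Nd_pos].
Qed.

Lemma Fp_cont mu t : continuous (Fp mu) t.
Proof.
  assert (Cw : forall t, continuous (w1f mu) t).
  { intros; unfold w1f. apply cplus; [apply continuous_cos| apply cmult; [apply cconst| apply continuous_sin]]. }
  assert (CN : forall t, continuous (Nf mu) t).
  { intros; unfold Nf. apply continuous_sqrt_comp. apply cplus; apply cmult; auto; apply continuous_sin. }
  assert (Cd : forall t, continuous (df mu) t).
  { intros; unfold df. apply cplus; apply cmult; auto; try apply continuous_cos; apply continuous_sin. }
  assert (Ccr : forall t, continuous (crf mu) t).
  { intros; unfold crf. apply cplus; [|apply copp]; apply cmult; auto; try apply continuous_cos; apply continuous_sin. }
  unfold Fp. apply cplus; [apply cid|]. apply cmult; [apply cconst|].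
  apply continuous_atan_comp. apply cmult; auto. apply cinv.
  - apply cplus; auto.
  - apply Rgt_not_eq. apply Nd_pos.
Qed.

Lemma Fp_close mu t : Rabs (Fp mu t - t) < PI.
Proof.
  unfold Fp. replace (t + 2 * atan (crf mu t / (Nf mu t + df mu t)) - t) with (2 * atan (crf mu t / (Nf mu t + df mu t))) by ring.
  destruct (atan_bound (crf mu t / (Nf mu t + df mu t))). apply Rabs_def1; lra.
Qed.

Lemma Fp_inv mu t : Fp (- mu) (Fp mu t) = t.
Proof.
  destruct (Fp_vv mu t) as [C S].
  destruct (Fp_vv (- mu) (Fp mu t)) as [C2 S2].
  assert (HN := Nf_pos mu t).
  assert (Ew : w1f (- mu) (Fp mu t) = cos t / Nf mu t).
  { unfold w1f at 1. rewrite C, S. unfold w1f. field. lra. }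
  assert (EN : Nf (- mu) (Fp mu t) = / Nf mu t).
  { unfold Nf at 1. rewrite Ew, S.
    replace (cos t / Nf mu t * (cos t / Nf mu t) + sin t / Nf mu t * (sin t / Nf mu t))
      with (/ Nf mu t * / Nf mu t)
      by (transitivity ((cos t * cos t + sin t * sin t) / (Nf mu t * Nf mu t)); [rewrite cs1; field; lra | field; lra]).
    apply sqrt_square. left. apply Rinv_0_lt_compat; auto. }
  rewrite Ew, EN in C2. rewrite S, EN in S2.
  apply ang_eq.
  - rewrite C2. field. lra.
  - rewrite S2. field. lra.
  - assert (H1 := Fp_close (- mu) (Fp mu t)). assert (H2 := Fp_close mu t).
    apply Rabs_def2 in H1. apply Rabs_def2 in H2. apply Rabs_def1; lra.
Qed.

Lemma Fp_fix mu t : sin t = 0 -> Fp mu t = t.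
Proof.
  intros E. unfold Fp, crf. rewrite E.
  replace (cos t * 0 - 0 * w1f mu t) with 0 by ring. unfold Rdiv. rewrite Rmult_0_l, atan_0. ring.
Qed.

Lemma Fp_incr mu : incr (fun _ => True) (Fp mu).
Proof.
  assert (HP := PI_RGT_0).
  assert (inj : injon (fun _ => True) (Fp mu)).
  { intros x y _ _ E. rewrite <- (Fp_inv mu x), <- (Fp_inv mu y), E. auto. }
  destruct (inj_mono (Fp mu) (fun _ => True)) as [I|I]; auto.
  - intros x y z; auto.
  - intros; apply Fp_cont.
  - exfalso. assert (Fp mu PI < Fp mu 0) by (apply I; auto).
    rewrite !Fp_fix in H; [lra| apply sin_0| apply sin_PI].
Qed.

Lemma Fp_par mu t : par (vv (Fp mu t)) (mapp (Mpar mu) (vv t)).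
Proof.
  destruct (Fp_vv mu t) as [C S]. unfold par, cross, vv, mapp, Mpar; simpl. rewrite C, S.
  unfold w1f. assert (HN := Nf_pos mu t). field. lra.
Qed.

Lemma sin_kpi (k : nat) : sin (INR k * PI) = 0.
Proof. apply sin_eq_0_1. exists (Z.of_nat k). rewrite <- INR_IZR_INZ. auto. Qed.

Lemma iso_half a b c d (k : nat) :
  INR k * PI < b - a < (INR k + 1) * PI -> INR k * PI < d - c < (INR k + 1) * PI ->
  proj_iso (oint a b) (std_atlas (oint a b)) (oint c d) (std_atlas (oint c d)).
Proof.
  intros H1 H2. assert (HP := PI_RGT_0). assert (0 <= INR k) by apply pos_INR.
  set (L1 := b - a). set (L2 := d - c). assert (EL1 : L1 = b - a) by reflexivity. assert (EL2 : L2 = d - c) by reflexivity.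
  assert (sL1 : sin L1 <> 0) by (apply (sin_nz (Z.of_nat k)); rewrite <- INR_IZR_INZ; auto).
  assert (sL2 : sin L2 <> 0) by (apply (sin_nz (Z.of_nat k)); rewrite <- INR_IZR_INZ; auto).
  set (mu := cos L2 / sin L2 - cos L1 / sin L1).
  set (F := Fp mu). set (G := Fp (- mu)).
  assert (GF : forall t, G (F t) = t) by (intros; apply Fp_inv).
  assert (FG : forall t, F (G t) = t).
  { intros t. unfold F, G. rewrite <- (Ropp_involutive mu) at 1. apply Fp_inv. }
  assert (F0 : F 0 = 0) by (apply Fp_fix; apply sin_0).
  assert (Fk : F (INR k * PI) = INR k * PI) by (apply Fp_fix; apply sin_kpi).
  assert (Fk1 : F ((INR k + 1) * PI) = (INR k + 1) * PI) by (apply Fp_fix; rewrite <- S_INR; apply sin_kpi).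
  assert (FI := Fp_incr mu). fold F in FI.
  assert (FL : F L1 = L2).
  { apply cong_small.
    - assert (F (INR k * PI) < F L1)  by (apply FI; auto; lra).
      assert (F L1 < F ((INR k + 1) * PI)) by (apply FI; auto; lra).
      apply Rabs_def1; lra.
    - apply par_vv_cong. unfold F. destruct (Fp_vv mu L1) as [C S].
      unfold par, cross, vv; simpl. rewrite C, S. unfold w1f, mu.
      assert (HN := Nf_pos (cos L2 / sin L2 - cos L1 / sin L1) L1). field. split; [lra|auto]. }
  assert (Ginc : forall u, 0 < u < L2 -> 0 < G u < L1).
  { intros u Hu. split.
    - destruct (Rlt_le_dec 0 (G u)) as [L|L]; auto. exfalso.
      destruct L as [L|L].
      + assert (F (G u) < F 0) by (apply FI; auto). rewrite FG in H0. lra.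
      + assert (F (G u) = F 0) by (rewrite L; auto). rewrite FG in H0. lra.
    - destruct (Rlt_le_dec (G u) L1) as [L|L]; auto. exfalso.
      destruct L as [L|L].
      + assert (F L1 < F (G u)) by (apply FI; auto). rewrite FG in H0. lra.
      + assert (F (G u) = F L1) by (rewrite L; auto). rewrite FG in H0. lra. }
  assert (Finc : forall u, 0 < u < L1 -> 0 < F u < L2).
  { intros u Hu. rewrite <- F0, <- FL. split; apply FI; auto; lra. }
  apply (iso_of_lift (oint a b) (oint c d) (fun t => c + F (t - a)) (fun s => a + G (s - c))
     (mmul (rot c) (mmul (Mpar mu) (rot (- a))))).
  - intros x Hx. unfold oint in *. assert (0 < F (x - a) < L2) by (apply Finc; unfold L1; lra).
    unfold L2 in H0; lra.
  - intros y Hy. unfold oint in *. assert (0 < G (y - c) < L1) by (apply Ginc; unfold L2; lra).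
    unfold L1 in H0; lra.
  - intros x _. cbv beta. replace (c + F (x - a) - c) with (F (x - a)) by ring. rewrite GF. ring.
  - intros y _. cbv beta. replace (a + G (y - c) - a) with (G (y - c)) by ring. rewrite FG. ring.
  - intros x _. apply cplus; [apply cconst|]. apply (ccomp (fun t => t - a) F).
    + apply cplus; [apply cid| apply cconst].
    + apply Fp_cont.
  - intros y _. apply cplus; [apply cconst|]. apply (ccomp (fun t => t - c) G).
    + apply cplus; [apply cid| apply cconst].
    + apply Fp_cont.
  - rewrite !mdet_mul, !mdet_rot. unfold mdet, Mpar; simpl. lra.
  - intros x _. rewrite !mapp_mul.
    replace (c + F (x - a)) with (F (x - a) + c) by ring. rewrite vv_shift. apply par_mapp.
    replace (x - a) with (x + - a) by ring. rewrite <- vv_shift. apply Fp_par.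
Qed.

Lemma iso_shift D1 D2 c : (forall x, D1 x -> D2 (x + c)) -> (forall y, D2 y -> D1 (y - c)) ->
  proj_iso D1 (std_atlas D1) D2 (std_atlas D2).
Proof.
  intros H1 H2. apply (iso_of_lift D1 D2 (fun x => x + c) (fun y => y - c) (rot c)); auto.
  - intros; ring. - intros; ring.
  - intros; apply cplus; [apply cid| apply cconst].
  - intros; apply cplus; [apply cid| apply cconst].
  - rewrite mdet_rot; lra.
  - intros x _. rewrite vv_shift. apply par_refl.
Qed.

Lemma iso_refl D1 D2 c : (forall x, D1 x -> D2 (c - x)) -> (forall y, D2 y -> D1 (c - y)) ->
  proj_iso D1 (std_atlas D1) D2 (std_atlas D2).
Proof.
  intros H1 H2. apply (iso_of_lift D1 D2 (fun x => c - x) (fun y => c - y) (refl c)); auto.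
  - intros; ring. - intros; ring.
  - intros; apply cplus; [apply cconst| apply copp; apply cid].
  - intros; apply cplus; [apply cconst| apply copp; apply cid].
  - rewrite mdet_refl; lra.
  - intros x _. rewrite vv_refl. apply par_refl.
Qed.

Definition Dev (A : atlas) (h : R -> R) (I : R -> Prop) : Prop :=
  (forall y, I y -> continuous h y) /\
  (forall U phi, A (U, phi) -> rel (fun y => I y /\ U y) (fun y => (phi y, 1)) (fun y => vv (h y))).

Lemma Dev_mono A (h : R -> R) (I I' : R -> Prop) : (forall y, I' y -> I y) -> Dev A h I -> Dev A h I'.
Proof.
  intros Hs [Hc Hr]. split; auto. intros U phi HU. apply rel_mono with (fun y => I y /\ U y); [|auto].
  intros y [H1 H2]; auto.
Qed.

Lemma Dev_glue A (h : R -> R) (I : R -> Prop) : open I ->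
  (forall x, I x -> exists e, 0 < e /\ exists h1, Dev A h1 (fun y => Rabs (y - x) < e) /\
      forall y, I y -> Rabs (y - x) < e -> h y = h1 y) -> Dev A h I.
Proof.
  intros HI H. split.
  - intros x Hx. destruct (H x Hx) as [e [He [h1 [[Hc _] E]]]].
    destruct (open_ball I x HI Hx) as [r [Hr Hb]].
    apply (cont_ext h1 h x (Rmin e r)); [apply Rmin_pos; auto| |].
    + intros y Hy. symmetry. apply E.
      * apply Hb. apply Rlt_le_trans with (1 := Hy); apply Rmin_r.
      * apply Rlt_le_trans with (1 := Hy); apply Rmin_l.
    + apply Hc. rewrite rabs0; auto.
  - intros U phi HU x [Hx Ux]. destruct (H x Hx) as [e [He [h1 [[_ Hr] E]]]].
    destruct (Hr U phi HU x) as [e' [He' [M [HM K]]]]; [split; auto; rewrite rabs0; auto|].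
    exists (Rmin e e'); split; [apply Rmin_pos; auto|]. exists M; split; auto.
    intros y [Iy Uy] Hy. rewrite E; auto.
    + apply K; [split; auto|]; apply Rlt_le_trans with (1 := Hy); [apply Rmin_l|apply Rmin_r].
    + apply Rlt_le_trans with (1 := Hy); apply Rmin_l.
Qed.

Lemma Dev_chart A (h : R -> R) (I : R -> Prop) U0 phi0 K : is_proj_atlas fullR A -> A (U0, phi0) ->
  (forall y, I y -> U0 y) -> (forall y, I y -> continuous h y) -> mdet K <> 0 ->
  (forall y, I y -> par (vv (h y)) (mapp K (phi0 y, 1))) -> Dev A h I.
Proof.
  intros [_ [_ HA]] H0 HIU Hc HK Hp. split; auto.
  intros U phi HU. apply rel_trans with (fun y => (phi0 y, 1)); [intros; apply nz_phi1| |].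
  - apply rel_mono with (fun y => U y /\ U0 y); [intros y [Iy Uy]; auto|].
    apply homog_rel. apply HA; auto.
  - apply (rel_const _ _ _ K); auto. intros y [Iy _]; auto.
Qed.

Lemma angle_loc (w1 w2 : R -> R) P e0 : 0 < e0 ->
  (forall y, Rabs (y - P) < e0 -> continuous w1 y /\ continuous w2 y) -> ~ (w1 P = 0 /\ w2 P = 0) ->
  exists e, 0 < e /\ e <= e0 /\ exists th : R -> R, (forall y, Rabs (y - P) < e -> continuous th y) /\
    (forall y, Rabs (y - P) < e -> par (vv (th y)) (w1 y, w2 y)).
Proof.
  intros He0 Hc Hnz.
  destruct (Req_dec (w2 P) 0) as [E2|E2].
  - assert (E1 : w1 P <> 0) by tauto.
    destruct (cont_eps w1 P (proj1 (Hc P ltac:(rewrite rabs0; auto))) (Rabs (w1 P))) as [d [Hd K]];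
      [apply Rabs_pos_lt; auto|].
    exists (Rmin e0 d). split; [apply Rmin_pos; auto|]. split; [apply Rmin_l|].
    assert (NZ : forall y, Rabs (y - P) < Rmin e0 d -> w1 y <> 0).
    { intros y Hy E. assert (Rabs (w1 y - w1 P) < Rabs (w1 P)) by (apply K; apply Rlt_le_trans with (1 := Hy); apply Rmin_r).
      rewrite E in H. replace (0 - w1 P) with (- w1 P) in H by ring. rewrite Rabs_Ropp in H. lra. }
    exists (fun y => atan (w2 y / w1 y)). split.
    + intros y Hy. assert (Rabs (y - P) < e0) by (apply Rlt_le_trans with (1 := Hy); apply Rmin_l).
      destruct (Hc y H). apply continuous_atan_comp. apply cmult; auto. apply cinv; auto.
    + intros y Hy. specialize (NZ y Hy). unfold par, cross, vv; simpl. rewrite cos_atan, sin_atan.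
      assert (0 < sqrt (1 + (w2 y / w1 y)²)) by (apply sqrt_lt_R0; pose proof (Rle_0_sqr (w2 y / w1 y)); lra).
      field. split; lra.
  - destruct (cont_eps w2 P (proj2 (Hc P ltac:(rewrite rabs0; auto))) (Rabs (w2 P))) as [d [Hd K]];
      [apply Rabs_pos_lt; auto|].
    exists (Rmin e0 d). split; [apply Rmin_pos; auto|]. split; [apply Rmin_l|].
    assert (NZ : forall y, Rabs (y - P) < Rmin e0 d -> w2 y <> 0).
    { intros y Hy E. assert (Rabs (w2 y - w2 P) < Rabs (w2 P)) by (apply K; apply Rlt_le_trans with (1 := Hy); apply Rmin_r).
      rewrite E in H. replace (0 - w2 P) with (- w2 P) in H by ring. rewrite Rabs_Ropp in H. lra. }
    exists (fun y => PI / 2 - atan (w1 y / w2 y)). split.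
    + intros y Hy. assert (Rabs (y - P) < e0) by (apply Rlt_le_trans with (1 := Hy); apply Rmin_l).
      destruct (Hc y H). apply cplus; [apply cconst|]. apply copp. apply continuous_atan_comp.
      apply cmult; auto. apply cinv; auto.
    + intros y Hy. specialize (NZ y Hy). unfold par, cross, vv; simpl.
      rewrite cos_shift, sin_shift, cos_atan, sin_atan.
      assert (0 < sqrt (1 + (w1 y / w2 y)²)) by (apply sqrt_lt_R0; pose proof (Rle_0_sqr (w1 y / w2 y)); lra).
      field. split; lra.
Qed.

Lemma phi_np A U phi : is_proj_atlas fullR A -> A (U, phi) -> forall y1 y2, U y1 -> U y2 ->
  par (phi y1, 1) (phi y2, 1) -> y1 = y2.
Proof.
  intros [HA _] HU y1 y2 U1 U2 P. destruct (HA U phi HU) as [_ [_ [_ Hi]]].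
  apply Hi; auto. unfold par, cross in P; simpl in P. lra.
Qed.

Lemma ND_chart A U phi (I : R -> Prop) : is_proj_atlas fullR A -> A (U, phi) -> (forall y, I y -> U y) ->
  ND I (fun y => (phi y, 1)).
Proof.
  intros HA HU HIU c d Hcd Hin.
  exists (c + (d - c) / 4), (c + 2 * (d - c) / 4), (c + 3 * (d - c) / 4).
  repeat split; try lra; intro P; apply (phi_np A U phi HA HU) in P; try lra; apply HIU; apply Hin; lra.
Qed.

Lemma conv_ball x e : conv (fun y => Rabs (y - x) < e).
Proof.
  intros a b c Ha Hc Hb. apply Rabs_def2 in Ha. apply Rabs_def2 in Hc. apply Rabs_def1; lra.
Qed.
Lemma open_ball_set x e : open (fun y => Rabs (y - x) < e).
Proof.
  intros y Hy. apply locally_ball. exists (e - Rabs (y - x)). split; [lra|].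
  intros z Hz. assert (Rabs (z - x) <= Rabs (z - y) + Rabs (y - x)).
  { replace (z - x) with ((z - y) + (y - x)) by ring. apply Rabs_triang. }
  lra.
Qed.
Lemma conv_and (I J : R -> Prop) : conv I -> conv J -> conv (fun y => I y /\ J y).
Proof. intros HI HJ a b c [Ia Ja] [Ic Jc] Hb. split; [apply (HI a b c)|apply (HJ a b c)]; auto. Qed.

Lemma Dev_rel A (h1 h2 : R -> R) (I : R -> Prop) : is_proj_atlas fullR A -> open I ->
  Dev A h1 I -> Dev A h2 I -> rel I (fun y => vv (h1 y)) (fun y => vv (h2 y)).
Proof.
  intros HA HI [_ R1] [_ R2]. apply rel_loc. intros x Hx.
  destruct HA as [HA1 [HA2 HA3]].
  destruct (HA2 x Logic.I) as [U [phi [HU Ux]]].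
  destruct (HA1 U phi HU) as [oU _].
  destruct (open_ball U x oU Ux) as [e [He Hb]].
  exists e; split; auto.
  apply rel_mono with (fun y => I y /\ U y); [intros y [Iy Hy]; auto|].
  apply rel_trans with (fun y => (phi y, 1)); [intros; apply nz_phi1| |].
  - apply rel_sym. apply R1; auto.
  - apply R2; auto.
Qed.

Lemma ND_Dev A (h : R -> R) (I : R -> Prop) : is_proj_atlas fullR A -> Dev A h I -> ND I (fun y => vv (h y)).
Proof.
  intros HA [_ Hr] c d Hcd Hin.
  set (m := (c + d) / 2).
  assert (Im : I m) by (apply Hin; unfold m; lra).
  destruct HA as [HA1 [HA2 HA3]].
  destruct (HA2 m Logic.I) as [U [phi [HU Um]]].
  destruct (HA1 U phi HU) as [oU _].
  destruct (open_ball U m oU Um) as [e1 [He1 Hb]].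
  destruct (Hr U phi HU m) as [e2 [He2 [M [HM K]]]]; [split; auto|].
  set (r := Rmin (Rmin e1 e2) ((d - c) / 2)).
  assert (r0 : 0 < r) by (unfold r; repeat apply Rmin_pos; lra).
  assert (r1 : r <= e1) by (unfold r; eapply Rle_trans; [apply Rmin_l|apply Rmin_l]).
  assert (r2 : r <= e2) by (unfold r; eapply Rle_trans; [apply Rmin_l|apply Rmin_r]).
  assert (r3 : r <= (d - c) / 2) by (unfold r; apply Rmin_r).
  assert (Pt : forall y, Rabs (y - m) < r -> I y /\ U y /\ par (vv (h y)) (mapp M (phi y, 1))).
  { intros y Hy. assert (Iy : I y) by (apply Hin; apply Rabs_def2 in Hy; unfold m in *; lra).
    assert (Uy : U y) by (apply Hb; lra). split; auto. split; auto. apply K; auto; lra. }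
  assert (NP : forall y1 y2, Rabs (y1 - m) < r -> Rabs (y2 - m) < r -> y1 <> y2 -> ~ par (vv (h y1)) (vv (h y2))).
  { intros y1 y2 B1 B2 N P. apply N.
    destruct (Pt y1 B1) as [_ [U1 P1]]. destruct (Pt y2 B2) as [_ [U2 P2]].
    apply (phi_np A U phi (conj HA1 (conj HA2 HA3)) HU y1 y2 U1 U2).
    apply (par_mapp_inv M); auto.
    apply par_trans with (vv (h y1)); [apply nz_vv| apply par_sym; auto|].
    apply par_trans with (vv (h y2)); [apply nz_vv| auto| auto]. }
  exists (m - r / 2), m, (m + r / 2).
  assert (A1 : Rabs (m - r / 2 - m) < r) by (apply Rabs_def1; lra).
  assert (A2 : Rabs (m - m) < r) by (rewrite rabs0; lra).
  assert (A3 : Rabs (m + r / 2 - m) < r) by (apply Rabs_def1; lra).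
  unfold m in *. repeat split; try lra; apply NP; auto; lra.
Qed.

Lemma Dev_unique A (h1 h2 : R -> R) (I : R -> Prop) x0 d : is_proj_atlas fullR A -> open I -> conv I ->
  Dev A h1 I -> Dev A h2 I -> 0 < d -> (forall y, Rabs (y - x0) < d -> I y) ->
  (forall y, Rabs (y - x0) < d -> h1 y = h2 y) -> forall y, I y -> h1 y = h2 y.
Proof.
  intros HA HI Hc D1 D2 Hd Hb E y Iy.
  assert (Ix0 : I x0) by (apply Hb; rewrite rabs0; auto).
  destruct (rigid I (fun y => vv (h1 y)) (fun y => vv (h2 y)) x0 Hc) as [N [HN K]]; auto.
  { intros; apply nz_vv. } { intros; apply nz_vv. } { apply (ND_Dev A); auto. }
  { apply (Dev_rel A); auto. }
  destruct (ND_Dev A h1 I HA D1 (x0 - d) (x0 + d)) as [y1 [y2 [y3 [Y1 [Y2 [Y3 [N12 [N13 N23]]]]]]]]; [lra| |].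
  { intros z Hz. apply Hb. apply Rabs_def1; lra. }
  assert (Pi : forall z, x0 - d < z < x0 + d -> par (mapp mid (vv (h1 z))) (mapp N (vv (h1 z)))).
  { intros z Hz. rewrite mapp_id. assert (B : Rabs (z - x0) < d) by (apply Rabs_def1; lra).
    rewrite (E z B) at 1. apply K. apply Hb; auto. }
  assert (U := uniq3 mid N _ _ _ N12 N13 N23 (Pi y1 Y1) (Pi y2 Y2) (Pi y3 Y3)).
  apply (cong_const h1 h2 I x0 y Hc); auto.
  - apply D1. - apply D2.
  - intros z Iz. apply cong_sym. apply par_vv_cong.
    apply par_trans with (mapp N (vv (h1 z))); [apply nz_mapp; auto; apply nz_vv| auto|].
    apply par_sym. rewrite <- (mapp_id (vv (h1 z))) at 1. apply U.
  - apply E. rewrite rabs0; auto.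
Qed.

Lemma cong_par a b u : cong a b -> par (vv a) u -> par (vv b) u.
Proof.
  intros C P. apply par_trans with (vv a); [apply nz_vv| |auto].
  apply par_vv_cong. apply cong_sym; auto.
Qed.

Lemma par_cong a b u : nz u -> par (vv a) u -> par (vv b) u -> cong a b.
Proof.
  intros Hu Pa Pb. apply par_vv_cong. apply par_trans with u; auto. apply par_sym; auto.
Qed.

Lemma ball_tri x y P r e : Rabs (y - x) < r -> r = e - Rabs (x - P) -> Rabs (y - P) < e.
Proof.
  intros H1 H2. assert (Rabs (y - P) <= Rabs (y - x) + Rabs (x - P)).
  { replace (y - P) with ((y - x) + (x - P)) by ring. apply Rabs_triang. }
  lra.
Qed.

Lemma extend A (h : R -> R) (I : R -> Prop) P : is_proj_atlas fullR A -> Dev A h I -> conv I -> open I ->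
  (forall eps, 0 < eps -> exists y, I y /\ Rabs (y - P) < eps) ->
  exists e, 0 < e /\ exists h', Dev A h' (fun y => I y \/ Rabs (y - P) < e) /\ forall y, I y -> h' y = h y.
Proof.
  intros HA [Dc Dr] Hc HI Near.
  assert (HA' := HA). destruct HA' as [HA1 [HA2 HA3]].
  destruct (HA2 P Logic.I) as [U [phi [HU UP]]].
  destruct (HA1 U phi HU) as [oU [_ [cphi _]]].
  destruct (open_ball U P oU UP) as [e0 [He0 Hb0]].
  set (O := fun y => I y /\ Rabs (y - P) < e0).
  assert (cO : conv O) by (apply conv_and; auto; apply conv_ball).
  destruct (Near e0 He0) as [x0 [Ix0 Bx0]].
  destruct (rigid O (fun y => (phi y, 1)) (fun y => vv (h y)) x0 cO) as [M [HM KM]].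
  { intros; apply nz_phi1. } { intros; apply nz_vv. }
  { apply (ND_chart A U phi O HA HU). intros y [_ Hy]; auto. }
  { apply rel_mono with (fun y => I y /\ U y); [intros y [Iy Hy]; auto|]. apply Dr; auto. }
  { split; auto. }
  set (w1 := fun y => m11 M * phi y + m12 M * 1).
  set (w2 := fun y => m21 M * phi y + m22 M * 1).
  assert (Ew : forall y, mapp M (phi y, 1) = (w1 y, w2 y)) by (intros; unfold mapp, w1, w2; simpl; auto).
  destruct (angle_loc w1 w2 P e0 He0) as [e1 [He1 [He10 [th [Cth Pth]]]]].
  { intros y Hy. assert (U y) by auto. assert (continuous phi y) by auto.
    unfold w1, w2; split; apply cplus; try apply cconst; apply cmult; auto; apply cconst. }
  { assert (H := nz_mapp M (phi P, 1) HM (nz_phi1 _)). rewrite Ew in H. exact H. }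
  destruct (Near e1 He1) as [y1 [Iy1 By1]].
  assert (Oy1 : O y1) by (split; auto; lra).
  assert (Cy1 : cong (h y1) (th y1)).
  { apply (par_cong _ _ (w1 y1, w2 y1)); [rewrite <- Ew; apply nz_mapp; auto; apply nz_phi1| |].
    - rewrite <- Ew. apply KM; auto.
    - apply Pth; auto. }
  destruct Cy1 as [j Hj].
  set (th' := fun y => th y + IZR j * PI).
  assert (Pth' : forall y, Rabs (y - P) < e1 -> par (vv (th' y)) (w1 y, w2 y)).
  { intros y Hy. apply (cong_par (th y)); [exists (- j)%Z; unfold th'; rewrite opp_IZR; ring| auto]. }
  assert (Cth' : forall y, Rabs (y - P) < e1 -> continuous th' y).
  { intros y Hy. unfold th'. apply cplus; [auto| apply cconst]. }
  set (O1 := fun y => I y /\ Rabs (y - P) < e1).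
  assert (Eq1 : forall y, O1 y -> h y = th' y).
  { intros y Oy. apply (cong_const h th' O1 y1 y); auto.
    - apply conv_and; auto; apply conv_ball.
    - intros z [Iz _]; auto.
    - intros z [_ Bz]; auto.
    - intros z [Iz Bz]. apply (par_cong _ _ (w1 z, w2 z)); [rewrite <- Ew; apply nz_mapp; auto; apply nz_phi1| |].
      + rewrite <- Ew. apply KM. split; auto; lra.
      + apply Pth'; auto.
    - split; auto.
    - unfold th'. lra. }
  assert (Dth' : Dev A th' (fun y => Rabs (y - P) < e1)).
  { apply (Dev_chart A th' _ U phi M HA HU).
    - intros y Hy. apply Hb0. lra.
    - exact Cth'.
    - exact HM.
    - intros y Hy. rewrite Ew. auto. }
  exists e1. split; auto.
  exists (fun y => if excluded_middle_informative (I y) then h y else th' y). split.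
  - apply Dev_glue.
    + apply open_or; auto. apply open_ball_set.
    + intros x [Ix|Bx].
      * destruct (open_ball I x HI Ix) as [r [Hr Hbr]].
        exists r. split; auto. exists h. split.
        { apply Dev_mono with I; auto. split; auto. }
        intros y _ Hy. destruct (excluded_middle_informative (I y)) as [Iy|Iy]; auto.
        exfalso; apply Iy; auto.
      * exists (e1 - Rabs (x - P)). split; [lra|]. exists th'. split.
        { apply Dev_mono with (fun y => Rabs (y - P) < e1); auto.
          intros y Hy. apply (ball_tri x y P (e1 - Rabs (x - P)) e1); auto. }
        intros y _ Hy. assert (By : Rabs (y - P) < e1) by (apply (ball_tri x y P (e1 - Rabs (x - P)) e1); auto).
        destruct (excluded_middle_informative (I y)) as [Iy|Iy]; auto.
        apply Eq1. split; auto.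
  - intros y Iy. destruct (excluded_middle_informative (I y)) as [_|N]; auto. contradiction.
Qed.

Definition B (T : R) : R -> Prop := fun y => Rabs (y - 0) < T.

Lemma global_dev A : is_proj_atlas fullR A -> exists h, Dev A h fullR.
Proof.
  intros HA. assert (HA' := HA). destruct HA' as [HA1 [HA2 HA3]].
  destruct (HA2 0 Logic.I) as [U0 [phi0 [HU0 U00]]].
  destruct (HA1 U0 phi0 HU0) as [oU0 [_ [cphi0 _]]].
  destruct (open_ball U0 0 oU0 U00) as [e0 [He0 Hb0]].
  destruct (angle_loc phi0 (fun _ => 1) 0 e0 He0) as [T0 [HT0 [HT00 [h0 [Ch0 Ph0]]]]].
  { intros y Hy. split; [apply cphi0; auto| apply cconst]. }
  { intros [_ E]; lra. }
  assert (D0 : Dev A h0 (B T0)).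
  { apply (Dev_chart A h0 (B T0) U0 phi0 mid HA HU0).
    - intros y Hy. apply Hb0. unfold B in Hy. lra.
    - exact Ch0.
    - rewrite mdet_id; lra.
    - intros y Hy. rewrite mapp_id. apply Ph0. exact Hy. }
  set (Norm := fun h T => Dev A h (B T) /\ forall y, Rabs (y - 0) < T0 -> h y = h0 y).
  assert (Uniq : forall h1 h2 T1 T2, 0 < T1 -> 0 < T2 -> Norm h1 T1 -> Norm h2 T2 ->
            forall y, Rabs (y - 0) < Rmin T1 T2 -> h1 y = h2 y).
  { intros h1 h2 T1 T2 P1 P2 [N1 E1] [N2 E2] y Hy.
    apply (Dev_unique A h1 h2 (B (Rmin T1 T2)) 0 (Rmin T0 (Rmin T1 T2)) HA).
    - apply open_ball_set. - apply conv_ball.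
    - apply Dev_mono with (B T1); auto. intros z Hz. unfold B in *. apply Rlt_le_trans with (1 := Hz). apply Rmin_l.
    - apply Dev_mono with (B T2); auto. intros z Hz. unfold B in *. apply Rlt_le_trans with (1 := Hz). apply Rmin_r.
    - repeat apply Rmin_pos; auto.
    - intros z Hz. unfold B. apply Rlt_le_trans with (1 := Hz). apply Rmin_r.
    - intros z Hz. rewrite E1, E2; auto; apply Rlt_le_trans with (1 := Hz); apply Rmin_l.
    - exact Hy. }
  assert (Small : forall T, 0 < T <= T0 -> Norm h0 T).
  { intros T HT. split; auto. apply Dev_mono with (B T0); auto. intros z Hz; unfold B in *; lra. }
  set (H := fun T => epsilon (inhabits h0) (fun h => Norm h T)).
  assert (Hspec : forall T, (exists h, Norm h T) -> Norm (H T) T).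
  { intros T Ex. unfold H. apply epsilon_spec. auto. }
  assert (Claim : forall T1, 0 < T1 -> exists h, Norm h T1).
  { intros T1 HT1. apply NNPP. intro NE.
    assert (T01 : T0 < T1).
    { destruct (Rlt_le_dec T0 T1); auto. exfalso. apply NE. exists h0. apply Small. lra. }
    set (E := fun T => 0 < T <= T1 /\ exists h, Norm h T).
    assert (Eb : bound E) by (exists T1; intros x [Hx _]; lra).
    assert (Ene : exists x, E x) by (exists T0; split; [lra| exists h0; apply Small; lra]).
    destruct (completeness E Eb Ene) as [Ts [HTs1 HTs2]].
    assert (T0s : T0 <= Ts) by (apply HTs1; split; [lra| exists h0; apply Small; lra]).
    assert (Ts1 : Ts <= T1) by (apply HTs2; intros x [Hx _]; lra).
    assert (Below : forall T, 0 < T < Ts -> exists h, Norm h T).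
    { intros T HT. destruct (classic (exists s, E s /\ T < s)) as [[s [[_ [h [Nh Eh]]] Hs]]|N].
      - exists h. split; auto. apply Dev_mono with (B s); auto. intros z Hz; unfold B in *; lra.
      - exfalso. assert (Ts <= T); [|lra]. apply HTs2. intros x Ex.
        destruct (Rle_lt_dec x T); auto. exfalso; apply N; eauto. }
    set (hs := fun y => H ((Rabs (y - 0) + Ts) / 2) y).
    assert (Ns : Norm hs Ts).
    { split.
      - apply Dev_glue; [apply open_ball_set|].
        intros x Hx. unfold B in Hx. set (Tx := (Rabs (x - 0) + Ts) / 2).
        assert (HTx : Norm (H Tx) Tx) by (apply Hspec; apply Below; unfold Tx; split; [pose proof (Rabs_pos (x - 0))|]; lra).
        exists ((Ts - Rabs (x - 0)) / 4). split; [lra|]. exists (H Tx). split.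
        + apply Dev_mono with (B Tx); [|apply HTx]. intros y Hy. unfold B.
          assert (Rabs (y - 0) <= Rabs (y - x) + Rabs (x - 0)) by (replace (y - 0) with ((y - x) + (x - 0)) by ring; apply Rabs_triang).
          unfold Tx; lra.
        + intros y Hy Hyx. unfold B in Hy. unfold hs.
          set (Ty := (Rabs (y - 0) + Ts) / 2).
          assert (HTy : Norm (H Ty) Ty) by (apply Hspec; apply Below; unfold Ty; split; [pose proof (Rabs_pos (y - 0))|]; lra).
          apply (Uniq _ _ Ty Tx); auto.
          * unfold Ty; pose proof (Rabs_pos (y - 0)); lra.
          * unfold Tx; pose proof (Rabs_pos (x - 0)); lra.
          * assert (Rabs (y - 0) <= Rabs (y - x) + Rabs (x - 0)) by (replace (y - 0) with ((y - x) + (x - 0)) by ring; apply Rabs_triang).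
            apply Rmin_glb_lt; unfold Ty, Tx; lra.
      - intros y Hy. unfold hs. set (Ty := (Rabs (y - 0) + Ts) / 2).
        assert (HTy : Norm (H Ty) Ty) by (apply Hspec; apply Below; unfold Ty; split; [pose proof (Rabs_pos (y - 0))|]; lra).
        apply HTy; auto. }
    destruct Ns as [Ds Es].
    destruct (extend A hs (B Ts) Ts HA Ds (conv_ball 0 Ts) (open_ball_set 0 Ts)) as [e1 [He1 [h1 [D1 E1]]]].
    { intros eps Heps. exists (Ts - Rmin eps Ts / 2).
      assert (0 < Rmin eps Ts) by (apply Rmin_pos; lra). assert (Rmin eps Ts <= eps) by apply Rmin_l.
      assert (Rmin eps Ts <= Ts) by apply Rmin_r.
      unfold B. split; apply Rabs_def1; lra. }
    set (e1' := Rmin e1 Ts).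
    assert (He1' : 0 < e1') by (apply Rmin_pos; lra).
    assert (e1'1 : e1' <= e1) by apply Rmin_l. assert (e1'2 : e1' <= Ts) by apply Rmin_r.
    set (I1 := fun y => Rabs (y - e1' / 2) < Ts + e1' / 2).
    assert (D1' : Dev A h1 I1).
    { apply Dev_mono with (2 := D1). intros y Hy. unfold I1, B in *. apply Rabs_def2 in Hy.
      destruct (Rlt_le_dec y Ts); [left; apply Rabs_def1; lra| right; apply Rabs_def1; lra]. }
    destruct (extend A h1 I1 (- Ts) HA D1' (conv_ball _ _) (open_ball_set _ _)) as [e2 [He2 [h2 [D2 E2]]]].
    { intros eps Heps. exists (- Ts + Rmin eps Ts / 2).
      assert (0 < Rmin eps Ts) by (apply Rmin_pos; lra). assert (Rmin eps Ts <= eps) by apply Rmin_l.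
      assert (Rmin eps Ts <= Ts) by apply Rmin_r.
      unfold I1. split; apply Rabs_def1; lra. }
    set (T' := Ts + Rmin e1' e2 / 2).
    assert (m0 : 0 < Rmin e1' e2) by (apply Rmin_pos; lra).
    assert (m1 : Rmin e1' e2 <= e1') by apply Rmin_l. assert (m2 : Rmin e1' e2 <= e2) by apply Rmin_r.
    assert (N' : Norm h2 T').
    { split.
      - apply Dev_mono with (2 := D2). intros y Hy. unfold B, I1, T' in *. apply Rabs_def2 in Hy.
        destruct (Rlt_le_dec (- Ts) y); [left; apply Rabs_def1; lra| right; apply Rabs_def1; lra].
      - intros y Hy. rewrite E2.
        + rewrite E1; [apply Es; auto|]. unfold B. lra.
        + unfold I1. apply Rabs_def2 in Hy. apply Rabs_def1; lra. }
    destruct (Rle_lt_dec T' T1) as [L|L].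
    + assert (TT : T' <= Ts).
      { apply HTs1. split; [split; [unfold T'; lra| exact L]| exists h2; auto]. }
      unfold T' in TT. lra.
    + apply NE. exists h2. destruct N' as [N1 N2]. split; auto. apply Dev_mono with (B T'); auto.
      intros y Hy; unfold B in *; lra. }
  exists (fun y => H (Rabs (y - 0) + 1) y).
  apply Dev_glue; [apply open_true|].
  intros x _. exists (1 / 2). split; [lra|]. exists (H (Rabs (x - 0) + 1)).
  assert (Nx : Norm (H (Rabs (x - 0) + 1)) (Rabs (x - 0) + 1)).
  { apply Hspec. apply Claim. pose proof (Rabs_pos (x - 0)); lra. }
  split.
  - apply Dev_mono with (B (Rabs (x - 0) + 1)); [|apply Nx]. intros y Hy. unfold B.
    assert (Rabs (y - 0) <= Rabs (y - x) + Rabs (x - 0)) by (replace (y - 0) with ((y - x) + (x - 0)) by ring; apply Rabs_triang).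
    lra.
  - intros y _ Hy.
    assert (Ny : Norm (H (Rabs (y - 0) + 1)) (Rabs (y - 0) + 1)).
    { apply Hspec. apply Claim. pose proof (Rabs_pos (y - 0)); lra. }
    pose proof (Rabs_pos (y - 0)). pose proof (Rabs_pos (x - 0)).
    apply (Uniq _ _ (Rabs (y - 0) + 1) (Rabs (x - 0) + 1)); auto; try lra.
    assert (Rabs (y - 0) <= Rabs (y - x) + Rabs (x - 0)) by (replace (y - 0) with ((y - x) + (x - 0)) by ring; apply Rabs_triang).
    apply Rmin_glb_lt; lra.
Qed.

Lemma conv_full : conv fullR.
Proof. intros x y z _ _ _. exact Logic.I. Qed.

Lemma Dev_locinj A h : is_proj_atlas fullR A -> Dev A h fullR ->
  forall x, fullR x -> exists e, 0 < e /\ forall y1 y2, fullR y1 -> fullR y2 -> Rabs (y1 - x) < e -> Rabs (y2 - x) < e ->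
    h y1 = h y2 -> y1 = y2.
Proof.
  intros HA [_ Hr] x _. assert (HA' := HA). destruct HA' as [HA1 [HA2 HA3]].
  destruct (HA2 x Logic.I) as [U [phi [HU Ux]]].
  destruct (HA1 U phi HU) as [oU _].
  destruct (open_ball U x oU Ux) as [e1 [He1 Hb]].
  destruct (Hr U phi HU x) as [e2 [He2 [M [HM K]]]]; [split; auto; exact Logic.I|].
  exists (Rmin e1 e2). split; [apply Rmin_pos; auto|].
  intros y1 y2 _ _ B1 B2 E.
  assert (A1 : Rabs (y1 - x) < e1) by (apply Rlt_le_trans with (1 := B1); apply Rmin_l).
  assert (A2 : Rabs (y2 - x) < e1) by (apply Rlt_le_trans with (1 := B2); apply Rmin_l).
  assert (C1 : Rabs (y1 - x) < e2) by (apply Rlt_le_trans with (1 := B1); apply Rmin_r).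
  assert (C2 : Rabs (y2 - x) < e2) by (apply Rlt_le_trans with (1 := B2); apply Rmin_r).
  apply (phi_np A U phi HA HU); auto.
  apply (par_mapp_inv M); auto.
  apply par_trans with (vv (h y1)); [apply nz_vv| apply par_sym; apply K; auto; split; auto; exact Logic.I|].
  rewrite E. apply K; auto. split; auto; exact Logic.I.
Qed.

Lemma Dev_neg A h : Dev A h fullR -> Dev A (fun y => - h y) fullR.
Proof.
  intros [Hc Hr]. split.
  - intros y Hy. apply copp. auto.
  - intros U phi HU. apply rel_trans with (fun y => vv (h y)); [intros; apply nz_vv| auto|].
    apply (rel_const _ _ _ (Mat 1 0 0 (-1))); [unfold mdet; simpl; lra|].
    intros y _. unfold par, cross, vv, mapp; simpl. rewrite cos_neg, sin_neg. ring.
Qed.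

Lemma incr_dev A : is_proj_atlas fullR A -> exists h, Dev A h fullR /\ incr fullR h.
Proof.
  intros HA. destruct (global_dev A HA) as [h Dh].
  assert (inj : injon fullR h).
  { apply locinj_inj; [apply conv_full| apply Dh| apply (Dev_locinj A); auto]. }
  destruct (inj_mono h fullR conv_full (proj1 Dh) inj) as [I|I].
  - exists h; auto.
  - exists (fun y => - h y). split; [apply Dev_neg; auto|].
    intros x y Hx Hy Hxy. assert (h y < h x) by (apply I; auto). lra.
Qed.

Lemma iso_gen A h (D2 : R -> Prop) : Dev A h fullR -> incr fullR h ->
  (forall y, D2 (h y)) -> (forall s, D2 s -> (exists y1, h y1 < s) /\ (exists y2, s < h y2)) ->
  proj_iso fullR A D2 (std_atlas D2).
Proof.
  intros [Hc Hr] Hi HD HS.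
  set (g := fun s => epsilon (inhabits 0) (fun y => h y = s)).
  assert (Gs : forall s y1 y2, h y1 < s -> s < h y2 -> h (g s) = s).
  { intros s y1 y2 H1 H2. unfold g. apply epsilon_spec.
    assert (y1 < y2).
    { destruct (Rlt_le_dec y1 y2) as [L|L]; auto. destruct L as [L|L].
      - assert (h y2 < h y1) by (apply Hi; auto; exact Logic.I). lra.
      - subst; lra. }
    destruct (ivt h y1 y2 s) as [c [_ Hc2]]; [lra| intros; apply Hc; exact Logic.I| left; lra|].
    eauto. }
  assert (Hinj : forall x y, h x = h y -> x = y).
  { intros x y E. destruct (Rtotal_order x y) as [L|[L|L]]; auto.
    - assert (h x < h y) by (apply Hi; auto; exact Logic.I). lra.
    - assert (h y < h x) by (apply Hi; auto; exact Logic.I). lra. }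
  assert (Hh1 : forall x, h (x - 1) < h x) by (intros; apply Hi; try exact Logic.I; lra).
  assert (Hh2 : forall x, h x < h (x + 1)) by (intros; apply Hi; try exact Logic.I; lra).
  exists h, g. split; [intros; auto|]. split; [intros; exact Logic.I|].
  split; [intros x _; apply Hinj; apply (Gs (h x) (x - 1) (x + 1)); auto|].
  split; [intros s Ds; destruct (HS s Ds) as [[y1 H1] [y2 H2]]; apply (Gs s y1 y2); auto|].
  split; [intros x _; apply Hc; exact Logic.I|].
  split.
  - intros s Ds. apply eps_cont. intros eps Heps.
    destruct (HS s Ds) as [[y1 H1] [y2 H2]].
    set (y := g s). assert (Ey : h y = s) by (apply (Gs s y1 y2); auto).
    assert (L1 : h (y - eps) < s) by (rewrite <- Ey; apply Hi; try exact Logic.I; lra).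
    assert (L2 : s < h (y + eps)) by (rewrite <- Ey; apply Hi; try exact Logic.I; lra).
    exists (Rmin (s - h (y - eps)) (h (y + eps) - s)). split; [apply Rmin_pos; lra|].
    intros s' Hs'.
    assert (m1 : Rmin (s - h (y - eps)) (h (y + eps) - s) <= s - h (y - eps)) by apply Rmin_l.
    assert (m2 : Rmin (s - h (y - eps)) (h (y + eps) - s) <= h (y + eps) - s) by apply Rmin_r.
    apply Rabs_def2 in Hs'.
    assert (E' : h (g s') = s') by (apply (Gs s' (y - eps) (y + eps)); lra).
    fold y. apply Rabs_def1.
    + destruct (Rlt_le_dec (g s') (y + eps)) as [L|L]; [lra|].
      exfalso. destruct L as [L|L].
      * assert (h (y + eps) < h (g s')) by (apply Hi; auto; exact Logic.I). lra.
      * rewrite <- L in E'. lra.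
    + destruct (Rlt_le_dec (y - eps) (g s')) as [L|L]; [lra|].
      exfalso. destruct L as [L|L].
      * assert (h (g s') < h (y - eps)) by (apply Hi; auto; exact Logic.I). lra.
      * rewrite L in E'. lra.
  - intros U phi V psi HU HV. apply rel_homog.
    destruct (chart_vec D2 V psi HV) as [S [HS2 K]].
    apply rel_trans with (fun y => vv (h y)); [intros; apply nz_vv| |].
    + apply rel_mono with (fun y => fullR y /\ U y); [intros y [Uy _]; split; auto; exact Logic.I| auto].
    + apply (rel_const _ _ _ S); auto. intros y [_ Vy]. auto.
Qed.

Lemma classify A : is_proj_atlas fullR A ->
     proj_iso fullR A fullR (std_atlas fullR) \/
     (exists a, proj_iso fullR A (above a) (std_atlas (above a))) \/
     (exists b, proj_iso fullR A (below b) (std_atlas (below b))) \/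
     (exists a b, a < b /\ proj_iso fullR A (oint a b) (std_atlas (oint a b))).
Proof.
  intros HA. destruct (incr_dev A HA) as [h [Dh Hi]].
  assert (Hh1 : forall x, h (x - 1) < h x) by (intros; apply Hi; try exact Logic.I; lra).
  assert (Hh2 : forall x, h x < h (x + 1)) by (intros; apply Hi; try exact Logic.I; lra).
  assert (Sup : (exists Mb, forall y, h y <= Mb) ->
     exists b, (forall y, h y < b) /\ forall s, s < b -> exists y, s < h y).
  { intros [Mb HM]. set (E := fun x => exists y, x = h y).
    destruct (completeness E) as [b [Hb1 Hb2]]; [exists Mb; intros x [y Hy]; subst; auto| exists (h 0); exists 0; auto|].
    exists b. split.
    - intros y. apply Rlt_le_trans with (h (y + 1)); auto. apply Hb1. exists (y + 1); auto.
    - intros s Hs. apply NNPP. intro N. assert (b <= s); [|lra]. apply Hb2. intros x [y Hy]; subst.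
      destruct (Rle_lt_dec (h y) s); auto. exfalso; apply N; eauto. }
  assert (Inf : (exists Mb, forall y, Mb <= h y) ->
     exists a, (forall y, a < h y) /\ forall s, a < s -> exists y, h y < s).
  { intros [Mb HM]. set (E := fun x => exists y, x = - h y).
    destruct (completeness E) as [m [Hb1 Hb2]]; [exists (- Mb); intros x [y Hy]; subst; specialize (HM y); lra| exists (- h 0); exists 0; auto|].
    exists (- m). split.
    - intros y. assert (- h (y - 1) <= m) by (apply Hb1; exists (y - 1); auto). specialize (Hh1 y). lra.
    - intros s Hs. apply NNPP. intro N. assert (m <= - s); [|lra]. apply Hb2. intros x [y Hy]; subst.
      destruct (Rle_lt_dec s (h y)); [lra|]. exfalso; apply N; eauto. }
  destruct (classic (exists Mb, forall y, h y <= Mb)) as [BU|NBU];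
  destruct (classic (exists Mb, forall y, Mb <= h y)) as [BL|NBL].
  - destruct (Sup BU) as [b [Hb1 Hb2]]. destruct (Inf BL) as [a [Ha1 Ha2]].
    right; right; right. exists a, b. split; [specialize (Ha1 0); specialize (Hb1 0); lra|].
    apply (iso_gen A h (oint a b) Dh Hi).
    + intros y; unfold oint; auto.
    + intros s [Hs1 Hs2]. split; auto.
  - destruct (Sup BU) as [b [Hb1 Hb2]].
    right; right; left. exists b. apply (iso_gen A h (below b) Dh Hi).
    + intros y; unfold below; auto.
    + intros s Hs. split; auto. apply NNPP; intro N. apply NBL. exists s. intros y.
      destruct (Rle_lt_dec s (h y)); auto. exfalso; eauto.
  - destruct (Inf BL) as [a [Ha1 Ha2]].
    right; left. exists a. apply (iso_gen A h (above a) Dh Hi).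
    + intros y; unfold above; auto.
    + intros s Hs. split; auto. apply NNPP; intro N. apply NBU. exists s. intros y.
      destruct (Rle_lt_dec (h y) s); auto. exfalso; eauto.
  - left. apply (iso_gen A h fullR Dh Hi).
    + intros; exact Logic.I.
    + intros s _. split.
      * apply NNPP; intro N. apply NBL. exists s. intros y.
        destruct (Rle_lt_dec s (h y)); auto. exfalso; eauto.
      * apply NNPP; intro N. apply NBU. exists s. intros y.
        destruct (Rle_lt_dec (h y) s); auto. exfalso; eauto.
Qed.

Lemma open_full : open fullR.
Proof. apply open_true. Qed.
Lemma open_above a : open (above a).
Proof. apply open_gt. Qed.
Lemma open_below b : open (below b).
Proof. apply open_lt. Qed.
Lemma open_oint a b : open (oint a b).
Proof. apply (open_and (fun t => a < t) (fun t => t < b)); [apply open_gt| apply open_lt]. Qed.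
Lemma conv_above a : conv (above a).
Proof. intros x y z Hx Hz Hy. unfold above in *. lra. Qed.
Lemma conv_below b : conv (below b).
Proof. intros x y z Hx Hz Hy. unfold below in *. lra. Qed.
Lemma conv_oint a b : conv (oint a b).
Proof. intros x y z Hx Hz Hy. unfold oint in *. lra. Qed.

Lemma LI_unb_both D1 D2 f g M t : conv D1 -> conv D2 -> LI D1 D2 f g M -> D1 t ->
  (forall n, D1 (t + INR n * PI)) -> (forall n, D1 (t - INR n * PI)) ->
  (forall n, D2 (f t + INR n * PI)) /\ (forall n, D2 (f t - INR n * PI)).
Proof.
  intros c1 c2 HL Ht Hp Hm. assert (HL' := HL). destruct HL' as [H1 _].
  destruct (LI_shift_n D1 D2 f g M c1 c2 HL) as [Sh|Sh]; split; intros n.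
  - rewrite <- Sh; auto.
  - assert (E := Sh (t - INR n * PI) n (Hm n)). replace (t - INR n * PI + INR n * PI) with t in E by ring.
    specialize (E Ht). replace (f t - INR n * PI) with (f (t - INR n * PI)) by lra. apply H1; auto.
  - assert (E := Sh (t - INR n * PI) n (Hm n)). replace (t - INR n * PI + INR n * PI) with t in E by ring.
    specialize (E Ht). replace (f t + INR n * PI) with (f (t - INR n * PI)) by lra. apply H1; auto.
  - rewrite <- Sh; auto.
Qed.

Lemma LI_unb_one D1 D2 f g M t : conv D1 -> conv D2 -> LI D1 D2 f g M -> D1 t ->
  ((forall n, D1 (t + INR n * PI)) \/ (forall n, D1 (t - INR n * PI))) ->
  (forall n, D2 (f t + INR n * PI)) \/ (forall n, D2 (f t - INR n * PI)).
Proof.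
  intros c1 c2 HL Ht [Hp|Hm].
  - apply (LI_unb_fwd D1 D2 f g M t); auto.
  - destruct (LI_unb_bwd D1 D2 f g M t) as [X|X]; auto.
Qed.

Lemma unb_oint c d (u : R) : ~ ((forall n, oint c d (u + INR n * PI)) \/ (forall n, oint c d (u - INR n * PI))).
Proof.
  intros [X|X].
  - apply (no_up_unb (oint c d) d u); auto. intros x [_ Hx]; auto.
  - apply (no_down_unb (oint c d) c u); auto. intros x [Hx _]; auto.
Qed.

Lemma pos_npi n : 0 <= INR n * PI.
Proof. apply Rmult_le_pos; [apply pos_INR| left; apply PI_RGT_0]. Qed.

Lemma nlt_pi n m : INR n * PI < INR m * PI -> (n < m)%nat.
Proof. intros H. apply INR_lt. apply (Rmult_lt_reg_r PI); auto. apply PI_RGT_0. Qed.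

Lemma winding_exists a b : a < b -> exists x, half_nat_pos x /\ winding a b x.
Proof.
  intros Hab. assert (HP := PI_RGT_0).
  destruct (up_floor ((b - a) / PI)) as [k [Hk1 Hk2]].
  assert (Hk0 : (0 <= k)%Z).
  { apply le_IZR. assert (0 < (b - a) / PI) by (apply Rdiv_lt_0_compat; lra). simpl.
    assert (-1 < IZR k) by lra. apply lt_IZR in H0. apply IZR_le. lia. }
  set (m := Z.to_nat k). assert (Em : INR m = IZR k) by (unfold m; rewrite INR_IZR_INZ, Z2Nat.id; auto).
  destruct (Req_dec (IZR k) ((b - a) / PI)) as [E|E].
  - exists (INR m). assert (Eb : b = a + INR m * PI) by (rewrite Em, E; field; lra).
    assert (m1 : (1 <= m)%nat).
    { destruct m; [|lia]. simpl in Eb. lra. }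
    split.
    + exists (2 * m)%nat. split; [lia|]. rewrite mult_INR. simpl. lra.
    + split; auto. left. exists m. split; auto.
  - exists (INR m + 1 / 2). split.
    + exists (2 * m + 1)%nat. split; [lia|]. rewrite plus_INR, mult_INR. simpl. lra.
    + split; auto. right. exists m. split; auto.
      assert (IZR k < (b - a) / PI) by lra.
      rewrite Em. split.
      * apply (Rmult_lt_compat_r PI) in H; auto. unfold Rdiv in H. rewrite Rmult_assoc, Rinv_l, Rmult_1_r in H; lra.
      * apply (Rmult_lt_compat_r PI) in Hk2; auto. unfold Rdiv in Hk2. rewrite Rmult_assoc, Rinv_l, Rmult_1_r in Hk2; lra.
Qed.

Lemma winding_of_half x : half_nat_pos x -> exists a b, winding a b x.
Proof.
  intros [n [Hn Ex]]. assert (HP := PI_RGT_0).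
  destruct (Nat.Even_or_Odd n) as [[m Hm]|[m Hm]]; subst.
  - exists 0, (INR m * PI). assert (1 <= m)%nat by lia.
    assert (1 <= INR m) by (apply (le_INR 1); auto).
    split; [nra|]. left. exists m. split; [ring|]. rewrite mult_INR. simpl. lra.
  - exists 0, ((INR m + 1 / 2) * PI). assert (0 <= INR m) by apply pos_INR.
    split; [nra|]. right. exists m. split; [split; nra|]. rewrite plus_INR, mult_INR. simpl. lra.
Qed.

Lemma iso_winding a b c d x : winding a b x -> winding c d x ->
  proj_iso (oint a b) (std_atlas (oint a b)) (oint c d) (std_atlas (oint c d)).
Proof.
  intros [Hab [[k1 [E1 X1]]|[k1 [E1 X1]]]] [Hcd [[k2 [E2 X2]]|[k2 [E2 X2]]]].
  - subst. apply INR_eq in X2. subst.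
    apply (iso_shift _ _ (c - a)); intros t [H1 H2]; split; lra.
  - exfalso. subst. assert (INR (2 * k1) = INR (2 * k2 + 1)) by (rewrite mult_INR, plus_INR, mult_INR; simpl; lra).
    apply INR_eq in H. lia.
  - exfalso. subst. assert (INR (2 * k2) = INR (2 * k1 + 1)) by (rewrite mult_INR, plus_INR, mult_INR; simpl; lra).
    apply INR_eq in H. lia.
  - assert (INR k1 = INR k2) by lra. apply INR_eq in H. subst.
    apply (iso_half a b c d k2); lra.
Qed.

Lemma winding_unique a b c d x y : winding a b x -> winding c d y ->
  proj_iso (oint a b) (std_atlas (oint a b)) (oint c d) (std_atlas (oint c d)) -> x = y.
Proof.
  intros Wx Wy Hiso. assert (HP := PI_RGT_0).
  assert (Hab : a < b) by (destruct Wx; auto). assert (Hcd : c < d) by (destruct Wy; auto).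
  destruct (LI_of_iso (oint a b) (oint c d)) as [f [g [M HL]]]; auto.
  { apply open_oint. } { apply open_oint. } { apply conv_oint. } { exists ((a + b) / 2); unfold oint; lra. }
  assert (HL2 := LI_sym _ _ _ _ _ HL).
  assert (Ch : forall n, INR n * PI < b - a <-> INR n * PI < d - c).
  { intros n. rewrite <- !Chain_oint. split; intros C.
    - apply (Chain_tr (oint a b) (oint c d) f g M n); auto; apply conv_oint.
    - apply (Chain_tr (oint c d) (oint a b) g f (madj M) n); auto; apply conv_oint. }
  assert (TB12 : forall n, TwoBad n (oint a b) -> TwoBad n (oint c d)).
  { intros n T. apply (TwoBad_tr (oint a b) (oint c d) f g M n); auto; apply conv_oint. }
  assert (TB21 : forall n, TwoBad n (oint c d) -> TwoBad n (oint a b)).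
  { intros n T. apply (TwoBad_tr (oint c d) (oint a b) g f (madj M) n); auto; apply conv_oint. }
  destruct Wx as [_ [[k1 [E1 X1]]|[k1 [E1 X1]]]]; destruct Wy as [_ [[k2 [E2 X2]]|[k2 [E2 X2]]]]; subst x y.
  - f_equal. destruct (lt_eq_lt_dec k1 k2) as [[L|L]|L]; auto; exfalso.
    + assert (INR k1 * PI < INR k2 * PI) by (apply Rmult_lt_compat_r; auto; apply lt_INR; auto).
      assert (INR k1 * PI < b - a) by (apply Ch; lra). lra.
    + assert (INR k2 * PI < INR k1 * PI) by (apply Rmult_lt_compat_r; auto; apply lt_INR; auto).
      assert (INR k2 * PI < d - c) by (apply Ch; lra). lra.
  - exfalso. destruct k1 as [|m]; [simpl in E1; lra|].
    assert (A1 : INR m * PI < d - c) by (apply Ch; rewrite E1, S_INR; lra).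
    assert (m <= k2)%nat by (assert (INR m * PI < INR (S k2) * PI) by (rewrite S_INR; lra); apply nlt_pi in H; lia).
    assert (A2 : INR k2 * PI < b - a) by (apply Ch; lra).
    assert (k2 <= m)%nat by (assert (INR k2 * PI < INR (S m) * PI) by lra; apply nlt_pi in H0; lia).
    assert (k2 = m) by lia. subst k2.
    apply (TwoBad_int a m). rewrite <- E1. apply TB21. apply TwoBad_half. lra.
  - exfalso. destruct k2 as [|m]; [simpl in E2; lra|].
    assert (A1 : INR m * PI < b - a) by (apply Ch; rewrite E2, S_INR; lra).
    assert (m <= k1)%nat by (assert (INR m * PI < INR (S k1) * PI) by (rewrite S_INR; lra); apply nlt_pi in H; lia).
    assert (A2 : INR k1 * PI < d - c) by (apply Ch; lra).
    assert (k1 <= m)%nat by (assert (INR k1 * PI < INR (S m) * PI) by lra; apply nlt_pi in H0; lia).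
    assert (k1 = m) by lia. subst k1.
    apply (TwoBad_int c m). rewrite <- E2. apply TB12. apply TwoBad_half. lra.
  - f_equal. f_equal. destruct (lt_eq_lt_dec k1 k2) as [[L|L]|L]; auto; exfalso.
    + assert (INR (S k1) <= INR k2) by (apply le_INR; lia). rewrite S_INR in H.
      assert (INR k2 * PI < b - a) by (apply Ch; lra). nra.
    + assert (INR (S k2) <= INR k1) by (apply le_INR; lia). rewrite S_INR in H.
      assert (INR k1 * PI < d - c) by (apply Ch; lra). nra.
Qed.

Theorem mainTheorem7 :
  (* the models are open projective curves *)
  is_proj_atlas fullR (std_atlas fullR) /\
  (forall a, is_proj_atlas (above a) (std_atlas (above a))) /\
  (forall b, is_proj_atlas (below b) (std_atlas (below b))) /\
  (forall a b, a < b -> is_proj_atlas (oint a b) (std_atlas (oint a b))) /\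
  (* every bounded interval has a winding number in (1/2)N^*, and every
     x in (1/2)N^* is the winding number of some bounded interval *)
  (forall a b, a < b -> exists x, half_nat_pos x /\ winding a b x) /\
  (forall x, half_nat_pos x -> exists a b, winding a b x) /\
  (* every connected open projective curve is isomorphic to a model *)
  (forall A : atlas, is_proj_atlas fullR A ->
     proj_iso fullR A fullR (std_atlas fullR) \/
     (exists a, proj_iso fullR A (above a) (std_atlas (above a))) \/
     (exists b, proj_iso fullR A (below b) (std_atlas (below b))) \/
     (exists a b, a < b /\ proj_iso fullR A (oint a b) (std_atlas (oint a b)))) /\
  (* H: all half-lines are isomorphic *)
  (forall a a', proj_iso (above a) (std_atlas (above a)) (above a') (std_atlas (above a'))) /\
  (forall a b, proj_iso (above a) (std_atlas (above a)) (below b) (std_atlas (below b))) /\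
  (forall b b', proj_iso (below b) (std_atlas (below b)) (below b') (std_atlas (below b'))) /\
  (* bounded intervals with the same winding number are isomorphic *)
  (forall a b c d x, winding a b x -> winding c d x ->
     proj_iso (oint a b) (std_atlas (oint a b)) (oint c d) (std_atlas (oint c d))) /\
  (* the models are pairwise non-isomorphic *)
  (forall a, ~ proj_iso fullR (std_atlas fullR) (above a) (std_atlas (above a))) /\
  (forall b, ~ proj_iso fullR (std_atlas fullR) (below b) (std_atlas (below b))) /\
  (forall a b, a < b -> ~ proj_iso fullR (std_atlas fullR) (oint a b) (std_atlas (oint a b))) /\
  (forall a c d, c < d -> ~ proj_iso (above a) (std_atlas (above a)) (oint c d) (std_atlas (oint c d))) /\
  (forall b c d, c < d -> ~ proj_iso (below b) (std_atlas (below b)) (oint c d) (std_atlas (oint c d))) /\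
  (forall a b c d x y, winding a b x -> winding c d y ->
     proj_iso (oint a b) (std_atlas (oint a b)) (oint c d) (std_atlas (oint c d)) -> x = y).
Proof.
  assert (HP := PI_RGT_0).
  split; [apply std_proj_atlas; apply open_full|].
  split; [intros a; apply std_proj_atlas; apply open_above|].
  split; [intros b; apply std_proj_atlas; apply open_below|].
  split; [intros a b _; apply std_proj_atlas; apply open_oint|].
  split; [apply winding_exists|].
  split; [apply winding_of_half|].
  split; [apply classify|].
  split; [intros a a'; apply (iso_shift _ _ (a' - a)); unfold above; intros; lra|].
  split; [intros a b; apply (iso_refl _ _ (a + b)); unfold above, below; intros; lra|].
  split; [intros b b'; apply (iso_shift _ _ (b' - b)); unfold below; intros; lra|].
  split; [apply iso_winding|].
  split.
  { intros a Hiso. destruct (LI_of_iso fullR (above a)) as [f [g [M HL]]]; auto.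
    { apply open_full. } { apply open_above. } { apply conv_full. } { exists 0; exact Logic.I. }
    destruct (LI_unb_both fullR (above a) f g M 0 conv_full (conv_above a) HL Logic.I) as [_ X];
      try (intros; exact Logic.I).
    apply (no_down_unb (above a) a (f 0)); auto. }
  split.
  { intros b Hiso. destruct (LI_of_iso fullR (below b)) as [f [g [M HL]]]; auto.
    { apply open_full. } { apply open_below. } { apply conv_full. } { exists 0; exact Logic.I. }
    destruct (LI_unb_both fullR (below b) f g M 0 conv_full (conv_below b) HL Logic.I) as [X _];
      try (intros; exact Logic.I).
    apply (no_up_unb (below b) b (f 0)); auto. }
  split.
  { intros a b Hab Hiso. destruct (LI_of_iso fullR (oint a b)) as [f [g [M HL]]]; auto.
    { apply open_full. } { apply open_oint. } { apply conv_full. } { exists 0; exact Logic.I. }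
    apply (unb_oint a b (f 0)). apply (LI_unb_one fullR (oint a b) f g M 0 conv_full (conv_oint a b) HL Logic.I).
    left; intros; exact Logic.I. }
  split.
  { intros a c d Hcd Hiso. destruct (LI_of_iso (above a) (oint c d)) as [f [g [M HL]]]; auto.
    { apply open_above. } { apply open_oint. } { apply conv_above. } { exists (a + 1); unfold above; lra. }
    apply (unb_oint c d (f (a + 1))). apply (LI_unb_one (above a) (oint c d) f g M (a + 1) (conv_above a) (conv_oint c d) HL).
    { unfold above; lra. }
    left; intros n; unfold above. pose proof (pos_npi n). lra. }
  split.
  { intros b c d Hcd Hiso. destruct (LI_of_iso (below b) (oint c d)) as [f [g [M HL]]]; auto.
    { apply open_below. } { apply open_oint. } { apply conv_below. } { exists (b - 1); unfold below; lra. }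
    apply (unb_oint c d (f (b - 1))). apply (LI_unb_one (below b) (oint c d) f g M (b - 1) (conv_below b) (conv_oint c d) HL).
    { unfold below; lra. }
    right; intros n; unfold below. pose proof (pos_npi n). lra. }
  apply winding_unique.
Qed.
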